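(* (i) For positive real numbers $a\ne b$, \[ \left[\frac{\Gamma(b)}{\Gamma(a)}\right]^{1/(b-a)}<\sqrt{ab}\,\left(\frac{a}{b}\right)^{1/(2(b-a))} \] holds if $0<|b-a|<1$, and the reverse strict inequality holds if $|b-a|>1$. (ii) Let $c\ne 0$ be real, and let $\beta,\gamma$ be real parameters. Consider the double inequality \[ \frac{(k-1)!}{2}\left[\left(\frac{1}{b-a}+\beta\right)\frac{1}{a^k}+\left(\beta-\frac{1}{b-a}\right)\frac{1}{b^k}\right] <\frac{(-1)^{k-1}\left[\psi^{(k-1)}(b)-\psi^{(k-1)}(a)\right]}{b-a} <\frac{(k-1)!}{2}\left[\left(\frac{1}{b-a}+\gamma\right)\frac{1}{a^k}+\left(\gamma-\frac{1}{b-a}\right)\frac{1}{b^k}\right]. \] If $0<|c|<1$, this double inequality holds for all $k\in\mathbb{N}$ and all positive $a,b$ with $b-a=c$ if and only if $\beta\le 1$ and $\gamma\ge\frac{1}{|c|}$. If $|c|>1$, it holds for all $k\in\mathbb{N}$ and all positive $a,b$ with $b-a=c$ if and only if $\beta\le\frac{1}{|c|}$ and $\gamma\ge 1$.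
   Context: $\Gamma$ is Euler's gamma function, $\psi=\Gamma'/\Gamma$ is the digamma function, $\psi^{(0)}=\psi$ and $\psi^{(m)}$ denotes its $m$-th derivative; $\mathbb{N}=\{1,2,\dots\}$. Here $\gamma$ denotes a real parameter, not Euler's constant. *)

(* Defs.v *)
From Stdlib Require Import Reals Factorial.
From Coquelicot Require Import Coquelicot.
Open Scope R_scope.

(* Euler's Gamma function, by Euler's integral
   Gamma x = int_0^oo t^(x-1) e^(-t) dt  (meaningful for x > 0, which is all we use). *)
Definition Gamma (x : R) : R :=
  RInt_gen (fun t => Rpower t (x - 1) * exp (- t))
           (at_right 0) (Rbar_locally p_infty).

Definition digamma (x : R) : R := Derive Gamma x / Gamma x.

Definition polygamma (m : nat) (x : R) : R := Derive_n digamma m x.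

Definition double_ineq (k : nat) (a b beta gam : R) : Prop :=
  INR (fact (k - 1)) / 2 *
    ((1 / (b - a) + beta) * / a ^ k + (beta - 1 / (b - a)) * / b ^ k)
  < (-1) ^ (k - 1) * (polygamma (k - 1) b - polygamma (k - 1) a) / (b - a)
  /\
  (-1) ^ (k - 1) * (polygamma (k - 1) b - polygamma (k - 1) a) / (b - a)
  < INR (fact (k - 1)) / 2 *
    ((1 / (b - a) + gam) * / a ^ k + (gam - 1 / (b - a)) * / b ^ k).

Definition holds_all (c beta gam : R) : Prop :=
  forall (k : nat) (a b : R), (1 <= k)%nat -> 0 < a -> 0 < b -> b - a = c ->
    double_ineq k a b beta gam.

(* Main.v *)
Require Import Defs.
From Stdlib Require Import Reals Lra Lia Factorial.
From Coquelicot Require Import Coquelicot.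
Open Scope R_scope.

Lemma quad_bound (f f1 f2 : R -> R) (lo hi M x y : R) :
  (forall t, lo < t < hi -> is_derive f t (f1 t)) ->
  (forall t, lo < t < hi -> is_derive f1 t (f2 t)) ->
  (forall t, lo < t < hi -> Rabs (f2 t) <= M) ->
  lo < x < hi -> lo < y < hi ->
  Rabs (f y - f x - (y - x) * f1 x) <= M * (y - x)^2.
Proof.
  intros H1 H2 HM Hx Hy.
  assert (HM0 : 0 <= M) by (apply Rle_trans with (Rabs (f2 x)); [apply Rabs_pos|auto]).
  destruct (Rtotal_order x y) as [Hlt|[Heq|Hgt]].
  - destruct (MVT_cor2 f f1 x y Hlt) as [xi [E Hxi]].
    { intros t Ht. apply is_derive_Reals, H1. lra. }
    destruct (MVT_cor2 f1 f2 x xi) as [eta [E2 Heta]]; [lra| |].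
    { intros t Ht. apply is_derive_Reals, H2. lra. }
    replace (f y - f x - (y - x) * f1 x) with ((y - x) * (f1 xi - f1 x)) by (rewrite E; ring).
    rewrite E2.
    replace ((y - x) * (f2 eta * (xi - x))) with (((y - x) * (xi - x)) * f2 eta) by ring.
    assert (Rabs (f2 eta) <= M) by (apply HM; lra).
    assert (0 <= (y-x)*(xi-x)) by nra.
    rewrite Rabs_mult, (Rabs_right ((y-x)*(xi-x))) by lra.
    apply Rle_trans with ((y-x)*(xi-x)*M).
    { apply Rmult_le_compat_l; lra. }
    apply Rle_trans with ((y-x)*(y-x)*M);
      [apply Rmult_le_compat_r; [lra| apply Rmult_le_compat_l; lra] | right; ring].
  - subst. replace (f y - f y - (y - y) * f1 y) with 0 by ring.
    replace (M * (y-y)^2) with 0 by ring. rewrite Rabs_R0; lra.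
  - destruct (MVT_cor2 f f1 y x Hgt) as [xi [E Hxi]].
    { intros t Ht. apply is_derive_Reals, H1. lra. }
    destruct (MVT_cor2 f1 f2 xi x) as [eta [E2 Heta]]; [lra| |].
    { intros t Ht. apply is_derive_Reals, H2. lra. }
    replace (f y - f x - (y - x) * f1 x) with ((x - y) * (f1 x - f1 xi)) by (replace (f y) with (f x - f1 xi * (x-y)) by lra; ring).
    rewrite E2.
    replace ((x - y) * (f2 eta * (x - xi))) with (((x - y) * (x - xi)) * f2 eta) by ring.
    assert (Rabs (f2 eta) <= M) by (apply HM; lra).
    assert (0 <= (x-y)*(x-xi)) by nra.
    rewrite Rabs_mult, (Rabs_right ((x-y)*(x-xi))) by lra.
    apply Rle_trans with ((x-y)*(x-xi)*M).
    { apply Rmult_le_compat_l; lra. }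
    apply Rle_trans with ((x-y)*(x-y)*M);
      [apply Rmult_le_compat_r; [lra| apply Rmult_le_compat_l; lra] | right; ring].
Qed.

Lemma deriv_of_quad (F : R -> R) (D x d M : R) :
  0 < d ->
  (forall y, Rabs (y - x) < d -> Rabs (F y - F x - (y - x) * D) <= M * (y - x)^2) ->
  is_derive F x D.
Proof.
  intros Hd HQ. apply is_derive_Reals. intros eps Heps.
  assert (HQ' : forall y, Rabs (y - x) < d -> Rabs (F y - F x - (y - x) * D) <= Rabs M * (y - x)^2).
  { intros y Hy. eapply Rle_trans. apply HQ; auto. apply Rmult_le_compat_r.
    apply pow2_ge_0. apply RRle_abs. }
  clear HQ. rename HQ' into HQ. assert (HM0 := Rabs_pos M). set (M' := Rabs M) in *.
  clearbody M'. clear M. rename M' into M.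
  assert (Hp : 0 < Rmin d (eps / (M + 1))).
  { apply Rmin_pos; [lra|]. apply Rdiv_lt_0_compat; lra. }
  exists (mkposreal _ Hp). intros h Hh0 Hh. simpl in Hh.
  assert (Hh1 : Rabs h < d) by (eapply Rlt_le_trans; [apply Hh|apply Rmin_l]).
  assert (Hh2 : Rabs h < eps / (M+1)) by (eapply Rlt_le_trans; [apply Hh|apply Rmin_r]).
  specialize (HQ (x + h)). replace (x + h - x) with h in HQ by ring.
  specialize (HQ Hh1).
  assert (Hah : 0 < Rabs h) by (apply Rabs_pos_lt; auto).
  replace ((F (x + h) - F x) / h - D) with ((F (x + h) - F x - h * D) / h) by (field; auto).
  rewrite Rabs_div by auto.
  apply Rle_lt_trans with (M * Rabs h).
  { apply Rmult_le_reg_r with (Rabs h); auto. unfold Rdiv. rewrite Rmult_assoc, Rinv_l by lra.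
    rewrite Rmult_1_r. replace (M * Rabs h * Rabs h) with (M * h^2).
    2:{ rewrite Rmult_assoc, <- Rabs_mult, Rabs_right by nra. simpl; ring. }
    auto. }
  apply Rle_lt_trans with ((M + 1) * Rabs h). { nra. }
  apply Rmult_lt_reg_r with (/(M+1)). { apply Rinv_0_lt_compat; lra. }
  replace ((M + 1) * Rabs h * / (M + 1)) with (Rabs h) by (field; lra). exact Hh2.
Qed.

Lemma GL (Fn Dn : nat -> R -> R) (F : R -> R) (x d M : R) :
  0 < d ->
  (forall y, Rabs (y - x) < d -> is_lim_seq (fun n => Fn n y) (F y)) ->
  (forall n y, Rabs (y - x) < d ->
     Rabs (Fn n y - Fn n x - (y - x) * Dn n x) <= M * (y - x)^2) ->
  exists D : R, is_lim_seq (fun n => Dn n x) D /\ is_derive F x D.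
Proof.
  intros Hd Hlim HQ.
  assert (HQ' : forall n y, Rabs (y - x) < d ->
     Rabs (Fn n y - Fn n x - (y - x) * Dn n x) <= Rabs M * (y - x)^2).
  { intros n y Hy. eapply Rle_trans. apply HQ; auto. apply Rmult_le_compat_r.
    apply pow2_ge_0. apply RRle_abs. }
  clear HQ. rename HQ' into HQ. assert (HM0 := Rabs_pos M). set (M' := Rabs M) in *.
  clearbody M'. clear M. rename M' into M.
  assert (Hc : ex_lim_seq_cauchy (fun n => Dn n x)).
  { intros eps.
    set (h := Rmin (d/2) (eps / (4 * (M+1)))).
    assert (Hh : 0 < h). { apply Rmin_pos; [lra|]. apply Rdiv_lt_0_compat; [apply cond_pos|lra]. }
    assert (Hhd : Rabs (x + h - x) < d).
    { replace (x+h-x) with h by ring. rewrite Rabs_right by lra.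
      apply Rle_lt_trans with (d/2); [apply Rmin_l|lra]. }
    assert (HhM : 2 * M * h <= eps / 2).
    { assert (h <= eps / (4 * (M+1))) by apply Rmin_r.
      assert (0 < eps) by apply cond_pos.
      apply Rle_trans with (2 * (M+1) * (eps / (4*(M+1)))).
      { apply Rle_trans with (2*(M+1)*h); [nra|]. apply Rmult_le_compat_l; lra. }
      right. field. lra. }
    set (Q := fun n => (Fn n (x + h) - Fn n x) / h).
    assert (HQl : is_lim_seq Q ((F (x + h) - F x) / h)).
    { unfold Q. apply is_lim_seq_scal_r with (a := / h) (lu := F (x+h) - F x).
      apply is_lim_seq_minus'. apply Hlim; auto. apply Hlim. rewrite Rminus_diag, Rabs_R0; lra. }
    assert (He2 : 0 < eps / 4) by (generalize (cond_pos eps); lra).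
    destruct (proj2 (is_lim_seq_spec _ _) HQl (mkposreal _ He2)) as [N HN].
    exists N. intros n m Hn Hm.
    assert (Hqn : Rabs (Dn n x - Q n) <= M * h).
    { specialize (HQ n (x+h) Hhd). replace (x+h-x) with h in HQ by ring.
      unfold Q. replace (Dn n x - (Fn n (x + h) - Fn n x) / h)
        with (- ((Fn n (x + h) - Fn n x - h * Dn n x) / h)) by (field; lra).
      rewrite Rabs_Ropp, Rabs_div by lra. rewrite (Rabs_right h) by lra.
      apply Rmult_le_reg_r with h; auto. unfold Rdiv. rewrite Rmult_assoc, Rinv_l by lra.
      nra. }
    assert (Hqm : Rabs (Dn m x - Q m) <= M * h).
    { specialize (HQ m (x+h) Hhd). replace (x+h-x) with h in HQ by ring.
      unfold Q. replace (Dn m x - (Fn m (x + h) - Fn m x) / h)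
        with (- ((Fn m (x + h) - Fn m x - h * Dn m x) / h)) by (field; lra).
      rewrite Rabs_Ropp, Rabs_div by lra. rewrite (Rabs_right h) by lra.
      apply Rmult_le_reg_r with h; auto. unfold Rdiv. rewrite Rmult_assoc, Rinv_l by lra.
      nra. }
    assert (Hn' := HN n Hn). assert (Hm' := HN m Hm).
    replace (Dn n x - Dn m x) with ((Dn n x - Q n) - (Dn m x - Q m)
       + ((Q n - (F (x + h) - F x) / h) - (Q m - (F (x + h) - F x) / h))) by ring.
    eapply Rle_lt_trans. apply Rabs_triang.
    eapply Rle_lt_trans. apply Rplus_le_compat; apply Rabs_triang.
    simpl in Hn', Hm'. rewrite !Rabs_Ropp. lra. }
  apply ex_lim_seq_cauchy_corr in Hc. destruct Hc as [D HD].
  exists D. split; auto.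
  apply deriv_of_quad with (d := d) (M := M); auto.
  intros y Hy.
  assert (Hl : is_lim_seq (fun n => Rabs (Fn n y - Fn n x - (y - x) * Dn n x))
                 (Rabs (F y - F x - (y - x) * D))).
  { apply (is_lim_seq_abs _ (F y - F x - (y - x) * D)).
    apply is_lim_seq_minus'. apply is_lim_seq_minus'. apply Hlim; auto.
    apply Hlim; rewrite Rminus_diag, Rabs_R0; lra.
    apply (is_lim_seq_scal_l _ (y - x) D). auto. }
  assert (H := is_lim_seq_le _ _ _ _ (fun n => HQ n y Hy) Hl (is_lim_seq_const _)).
  simpl in H. auto.
Qed.

Lemma exRc (f : R -> R) a b :
  (forall z, Rmin a b <= z <= Rmax a b -> continuous f z) -> ex_RInt f a b.
Proof. exact (ex_RInt_continuous (V := R_CompleteNormedModule) f a b). Qed.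
Lemma contd (f : R -> R) x : ex_derive f x -> continuous f x.
Proof. exact (ex_derive_continuous (K := R_AbsRing) (V := R_NormedModule) f x). Qed.
Lemma RIntD (f df : R -> R) a b :
  (forall x, Rmin a b <= x <= Rmax a b -> is_derive f x (df x)) ->
  (forall x, Rmin a b <= x <= Rmax a b -> continuous df x) ->
  is_RInt df a b (f b - f a).
Proof. exact (is_RInt_derive (V := R_CompleteNormedModule) f df a b). Qed.
Lemma Chasles (f : R -> R) a b c :
  ex_RInt f a b -> ex_RInt f b c -> RInt f a b + RInt f b c = RInt f a c.
Proof. exact (RInt_Chasles (V := R_CompleteNormedModule) f a b c). Qed.

Definition gg (x t : R) := exp ((x - 1) * ln t - t).
Definition sq (x : R) (n : nat) := RInt (gg x) (/ (INR n + 1)) (INR n + 1).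

Lemma gg_pos x t : 0 < gg x t.
Proof. apply exp_pos. Qed.

Lemma gg_cont x t : 0 < t -> continuous (gg x) t.
Proof. intros Ht. apply (contd (gg x)). unfold gg. auto_derive. lra. Qed.

Lemma gg_ex x u v : 0 < u -> 0 < v -> ex_RInt (gg x) u v.
Proof.
  intros Hu Hv. apply exRc. intros z Hz. apply gg_cont.
  assert (0 < Rmin u v) by (apply Rmin_pos; auto). lra.
Qed.

Lemma RInt_grow x u' u v v' : 0 < u' -> u' <= u -> u <= v -> v <= v' ->
  RInt (gg x) u v <= RInt (gg x) u' v'.
Proof.
  intros H1 H2 H3 H4.
  assert (E1 := Chasles (gg x) u' u v' (gg_ex x u' u ltac:(lra) ltac:(lra))
                 (gg_ex x u v' ltac:(lra) ltac:(lra))).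
  assert (E2 := Chasles (gg x) u v v' (gg_ex x u v ltac:(lra) ltac:(lra))
                 (gg_ex x v v' ltac:(lra) ltac:(lra))).
  assert (0 <= RInt (gg x) u' u).
  { apply RInt_ge_0; auto. apply gg_ex; lra. intros; left; apply gg_pos. }
  assert (0 <= RInt (gg x) v v').
  { apply RInt_ge_0; auto. apply gg_ex; lra. intros; left; apply gg_pos. }
  lra.
Qed.

Lemma tail_bound x : exists C, forall t, 1 <= t -> (x - 1) * ln t - t <= C - t / 2.
Proof.
  destruct (Rle_or_lt x 1) as [Hx|Hx].
  - exists 0. intros t Ht. assert (0 <= ln t) by (rewrite <- ln_1; apply ln_le; lra).
    assert ((x-1) * ln t <= 0) by nra. lra.
  - exists ((x - 1) * (ln (2 * (x - 1)) - 1)). intros t Ht.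
    set (m := 2 * (x - 1)).
    assert (Hm : 0 < m) by (unfold m; lra).
    assert (H1 : ln (t / m) <= t / m - 1).
    { assert (0 < t / m) by (apply Rdiv_lt_0_compat; lra).
      generalize (exp_ineq1_le (ln (t/m))). rewrite exp_ln by auto. lra. }
    rewrite ln_div in H1 by lra.
    assert (H2 : (x - 1) * (t / m) = t / 2) by (unfold m; field; lra).
    assert (H3 : (x-1) * ln t <= (x-1) * (t/m - 1 + ln m)) by (apply Rmult_le_compat_l; lra).
    nra.
Qed.

Lemma exp_bound_inv y : 0 <= y -> exp (- y) <= / (1 + y).
Proof.
  intros Hy. rewrite exp_Ropp. apply Rinv_le_contravar. lra. apply exp_ineq1_le.
Qed.

Lemma sq_bound x : 0 < x -> exists B, forall n, sq x n <= B.
Proof.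
  intros Hx. destruct (tail_bound x) as [C HC].
  exists (/ x + 2 * exp C). intros n. unfold sq.
  set (u := / (INR n + 1)). set (v := INR n + 1).
  assert (Hv : 1 <= v) by (unfold v; generalize (pos_INR n); lra).
  assert (Hu : 0 < u <= 1).
  { unfold u. generalize (pos_INR n); intro. split. apply Rinv_0_lt_compat; lra. rewrite <- Rinv_1. apply Rinv_le_contravar; lra. }
  rewrite <- (Chasles (gg x) u 1 v) by (apply gg_ex; lra).
  assert (HA : RInt (gg x) u 1 <= / x).
  { apply Rle_trans with (RInt (fun t => exp ((x - 1) * ln t)) u 1).
    - apply RInt_le. lra. apply gg_ex; lra.
      + apply exRc. intros z Hz. apply contd. auto_derive.
        assert (0 < Rmin u 1) by (apply Rmin_pos; lra). lra.
      + intros t Ht. unfold gg. apply exp_le_3 || idtac.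
        destruct (Rlt_or_le ((x - 1) * ln t - t) ((x - 1) * ln t)).
        * left. apply exp_increasing. auto.
        * lra.
    - assert (E : is_RInt (fun t => exp ((x - 1) * ln t)) u 1
                    (exp (x * ln 1) / x - exp (x * ln u) / x)).
      { apply (RIntD (fun t => exp (x * ln t) / x)).
        + intros t Ht. rewrite Rmin_left in Ht by lra. rewrite Rmax_right in Ht by lra.
          auto_derive. lra.
          replace ((x - 1) * ln t) with (x * ln t + - ln t) by ring.
          rewrite exp_plus, exp_Ropp, exp_ln by lra. field. split; lra.
        + intros t Ht. rewrite Rmin_left in Ht by lra. apply contd.
          auto_derive. lra. }
      rewrite (is_RInt_unique _ _ _ _ E).
      rewrite ln_1, Rmult_0_r, exp_0.
      assert (0 < exp (x * ln u) / x) by (apply Rdiv_lt_0_compat; [apply exp_pos|lra]).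
      unfold Rdiv. rewrite Rmult_1_l. unfold Rdiv in H. lra. }
  assert (HB : RInt (gg x) 1 v <= 2 * exp C).
  { apply Rle_trans with (RInt (fun t => exp (C - t / 2)) 1 v).
    - apply RInt_le. lra. apply gg_ex; lra.
      + apply exRc. intros z Hz. apply contd. auto_derive. auto.
      + intros t Ht. unfold gg. destruct (HC t ltac:(lra)) as [Hl|He].
        * left. apply exp_increasing. auto.
        * rewrite He. lra.
    - assert (E : is_RInt (fun t => exp (C - t / 2)) 1 v
                    (- 2 * exp (C - v / 2) - - 2 * exp (C - 1 / 2))).
      { apply (RIntD (fun t => - 2 * exp (C - t / 2))).
        + intros t Ht. auto_derive. auto. replace (C + - (t * / 2)) with (C - t / 2) by (unfold Rdiv; ring). lra.
        + intros t Ht. apply contd. auto_derive. auto. }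
      rewrite (is_RInt_unique _ _ _ _ E).
      assert (0 < exp (C - v/2)) by apply exp_pos.
      assert (exp (C - 1/2) <= exp C).
      { destruct (Rlt_or_le (C - 1/2) C). left; apply exp_increasing; auto. lra. }
      lra. }
  lra.
Qed.

Lemma sq_incr x n : sq x n <= sq x (S n).
Proof.
  unfold sq. rewrite S_INR. generalize (pos_INR n); intro.
  apply RInt_grow.
  - apply Rinv_0_lt_compat; lra.
  - apply Rinv_le_contravar; lra.
  - apply Rle_trans with 1. rewrite <- Rinv_1. apply Rinv_le_contravar; lra. lra.
  - lra.
Qed.

Lemma sq_lim x : 0 < x -> exists l : R, is_lim_seq (sq x) l.
Proof.
  intros Hx. destruct (sq_bound x Hx) as [B HB].
  assert (Hc := Lim_seq_correct (sq x) (ex_lim_seq_incr _ (sq_incr x))).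
  assert (H1 := is_lim_seq_le _ _ _ _ HB Hc (is_lim_seq_const B)).
  assert (H2 : forall n, sq x 0 <= sq x n).
  { induction n. lra. eapply Rle_trans. apply IHn. apply sq_incr. }
  assert (H3 := is_lim_seq_le _ _ _ _ H2 (is_lim_seq_const _) Hc).
  destruct (Lim_seq (sq x)) as [l| |] eqn:E; simpl in H1, H3; try contradiction.
  exists l. auto.
Qed.

Lemma arch_nat (A : R) : exists N : nat, A <= INR N.
Proof.
  destruct (INR_archimed 1 A) as [N HN]; [lra|]. exists N. lra.
Qed.

Lemma RInt_le_lim x (l : R) u v : is_lim_seq (sq x) l -> 0 < u -> u <= v -> RInt (gg x) u v <= l.
Proof.
  intros Hl Hu Huv.
  destruct (arch_nat (Rmax v (/ u))) as [N HN].
  apply Rle_trans with (sq x N).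
  - unfold sq. generalize (pos_INR N); intro. apply RInt_grow.
    + apply Rinv_0_lt_compat; lra.
    + rewrite <- (Rinv_inv u). apply Rinv_le_contravar. apply Rinv_0_lt_compat; lra.
      generalize (Rmax_r v (/ u)). lra.
    + auto.
    + generalize (Rmax_l v (/ u)). lra.
  - apply (is_lim_seq_incr_compare _ _ Hl (sq_incr x)).
Qed.

Lemma gg_gen x (l : R) : 0 < x -> is_lim_seq (sq x) l ->
  is_RInt_gen (gg x) (at_right 0) (Rbar_locally p_infty) l.
Proof.
  intros Hx Hl P [eps Heps].
  destruct (proj2 (is_lim_seq_spec _ _) Hl eps) as [N HN].
  specialize (HN N (Nat.le_refl _)). simpl in HN.
  generalize (pos_INR N); intro.
  apply Filter_prod with (Q := fun u => 0 < u <= / (INR N + 1)) (R := fun v => INR N + 1 <= v).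
  - assert (HN1 : 0 < INR N + 1) by lra.
    exists (mkposreal _ (Rinv_0_lt_compat _ HN1)).
    intros y Hy Hy0. simpl in Hy. unfold ball in Hy; simpl in Hy; unfold AbsRing_ball, abs, minus, plus, opp in Hy; simpl in Hy.
    rewrite Ropp_0, Rplus_0_r in Hy. rewrite Rabs_right in Hy by lra. lra.
  - exists (INR N + 1). intros; lra.
  - intros u v [Hu1 Hu2] Hv. simpl. exists (RInt (gg x) u v). split.
    + apply (RInt_correct (V := R_CompleteNormedModule)). apply gg_ex; lra.
    + apply Heps.
      assert (Huv : u <= v).
      { apply Rle_trans with 1; [|lra]. apply Rle_trans with (/ (INR N + 1)); auto.
        rewrite <- Rinv_1. apply Rinv_le_contravar; lra. }
      assert (Hup := RInt_le_lim x l u v Hl ltac:(lra) Huv).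
      assert (Hlow : sq x N <= RInt (gg x) u v).
      { unfold sq. apply RInt_grow; auto. apply Rle_trans with 1; [|lra].
        rewrite <- Rinv_1. apply Rinv_le_contravar; lra. }
      change (Rabs (RInt (gg x) u v - l) < eps).
      apply Rabs_def1; unfold Rminus in *; apply Rabs_def2 in HN; lra.
Qed.

Lemma Gamma_lim x : 0 < x -> is_lim_seq (sq x) (Gamma x).
Proof.
  intros Hx. destruct (sq_lim x Hx) as [l Hl].
  replace (Gamma x) with l; auto.
  symmetry. unfold Gamma. apply (is_RInt_gen_unique (V := R_CompleteNormedModule)).
  apply (is_RInt_gen_ext (V := R_CompleteNormedModule) (gg x)).
  2: apply gg_gen; auto.
  apply Filter_prod with (Q := fun u => 0 < u) (R := fun v => 0 < v).
  - exists (mkposreal 1 Rlt_0_1). intros; auto.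
  - exists 0. auto.
  - intros u v Hu Hv t Ht. simpl in Ht.
    assert (0 < Rmin u v) by (apply Rmin_pos; auto).
    unfold gg, Rpower. rewrite <- exp_plus. reflexivity.
Qed.

Lemma Gamma_pos x : 0 < x -> 0 < Gamma x.
Proof.
  intros Hx. assert (Hl := Gamma_lim x Hx).
  assert (H := is_lim_seq_incr_compare _ _ Hl (sq_incr x) 1).
  eapply Rlt_le_trans; [|apply H]. unfold sq. simpl.
  apply RInt_gt_0.
  - apply Rlt_le_trans with 1. rewrite <- Rinv_1. apply Rinv_lt_contravar; lra. lra.
  - intros; apply gg_pos.
  - intros t Ht. apply gg_cont.
    assert (0 < / (1 + 1)) by (apply Rinv_0_lt_compat; lra). lra.
Qed.

Lemma RInt_lin (f g : R -> R) p q u v : ex_RInt f u v -> ex_RInt g u v ->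
  RInt (fun t => p * f t + q * g t) u v = p * RInt f u v + q * RInt g u v.
Proof.
  intros Hf Hg.
  assert (e1 : ex_RInt (fun t => scal p (f t)) u v) by (apply (ex_RInt_scal (V := R_CompleteNormedModule)); auto).
  assert (e2 : ex_RInt (fun t => scal q (g t)) u v) by (apply (ex_RInt_scal (V := R_CompleteNormedModule)); auto).
  assert (E := RInt_plus (V := R_CompleteNormedModule) (fun t => scal p (f t)) (fun t => scal q (g t)) u v e1 e2).
  rewrite !(RInt_scal (V := R_CompleteNormedModule)) in E by auto.
  exact E.
Qed.

Lemma lim_scal (u : nat -> R) (a l : R) : is_lim_seq u l -> is_lim_seq (fun n => a * u n) (a * l).
Proof. intros H. exact (is_lim_seq_scal_l u a l H). Qed.

Lemma squeeze0 (a b : nat -> R) : (forall n, 0 <= a n <= b n) -> is_lim_seq b 0 -> is_lim_seq a 0.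
Proof.
  intros H Hb. apply is_lim_seq_le_le with (u := fun _ => 0) (w := b); auto.
  apply is_lim_seq_const.
Qed.

Lemma lim_inv_lin (w : nat -> R) (K : R) : 0 < K -> is_lim_seq w p_infty ->
  (forall n, 0 <= w n) -> is_lim_seq (fun n => / (1 + K * w n)) 0.
Proof.
  intros HK Hw Hp.
  assert (H : is_lim_seq (fun n => 1 + K * w n) p_infty).
  { apply (is_lim_seq_plus _ _ 1 p_infty p_infty).
    - apply is_lim_seq_const.
    - apply (is_lim_seq_scal_l _ K p_infty) in Hw.
      replace (Rbar_mult K p_infty) with p_infty in Hw; auto.
      simpl. unfold Rbar_mult'. destruct (Rle_dec 0 K); [|lra].
      destruct (Rle_lt_or_eq_dec 0 K r); [auto|lra].
    - reflexivity. }
  apply (is_lim_seq_inv _ _ H). discriminate.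
Qed.

Lemma lim_INR1 : is_lim_seq (fun n => INR n + 1) p_infty.
Proof.
  apply (is_lim_seq_plus _ _ p_infty 1 p_infty). apply is_lim_seq_INR. apply is_lim_seq_const. reflexivity.
Qed.

Lemma Fb_top x : is_lim_seq (fun n => exp (x * ln (INR n + 1) - (INR n + 1))) 0.
Proof.
  destruct (tail_bound (x + 1)) as [C HC].
  apply squeeze0 with (b := fun n => exp C * / (1 + / 2 * (INR n + 1))).
  - intros n. generalize (pos_INR n); intro. split. left; apply exp_pos.
    specialize (HC (INR n + 1) ltac:(lra)). replace (x + 1 - 1) with x in HC by ring.
    apply Rle_trans with (exp (C - (INR n + 1) / 2)).
    { destruct HC as [HC|HC]. left; apply exp_increasing; auto. rewrite HC; lra. }
    unfold Rminus. rewrite exp_plus. apply Rmult_le_compat_l. left; apply exp_pos.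
    replace ((INR n + 1) / 2) with (/ 2 * (INR n + 1)) by field. apply exp_bound_inv. lra.
  - replace 0 with (exp C * 0) by ring.
    apply (is_lim_seq_scal_l _ (exp C) 0). apply lim_inv_lin. lra. apply lim_INR1.
    intros n; generalize (pos_INR n); lra.
Qed.

Lemma Fb_bot x : 0 < x -> is_lim_seq (fun n => exp (x * ln (/ (INR n + 1)) - / (INR n + 1))) 0.
Proof.
  intros Hx.
  apply squeeze0 with (b := fun n => / (1 + x * ln (INR n + 1))).
  - intros n. generalize (pos_INR n); intro. split. left; apply exp_pos.
    rewrite ln_Rinv by lra.
    assert (0 <= ln (INR n + 1)) by (rewrite <- ln_1; apply ln_le; lra).
    apply Rle_trans with (exp (- (x * ln (INR n + 1)))).
    { assert (0 < / (INR n + 1)) by (apply Rinv_0_lt_compat; lra).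
      left; apply exp_increasing. lra. }
    apply exp_bound_inv. nra.
  - apply lim_inv_lin; auto.
    + apply (is_lim_comp_seq ln (fun n => INR n + 1) p_infty p_infty).
      apply is_lim_ln_p. exists O. intros; discriminate. apply lim_INR1.
    + intros n. generalize (pos_INR n); intro. rewrite <- ln_1; apply ln_le; lra.
Qed.

Lemma sq_rec x n : 0 < x ->
  sq (x + 1) n = x * sq x n + exp (x * ln (/ (INR n + 1)) - / (INR n + 1))
                 - exp (x * ln (INR n + 1) - (INR n + 1)).
Proof.
  intros Hx. unfold sq. generalize (pos_INR n); intro.
  set (u := / (INR n + 1)). set (v := INR n + 1).
  assert (Hu : 0 < u) by (apply Rinv_0_lt_compat; lra).
  assert (Hv : 0 < v) by (unfold v; lra).
  assert (E2 := RInt_lin (gg x) (gg (x+1)) x (-1) u v (gg_ex _ _ _ Hu Hv) (gg_ex _ _ _ Hu Hv)).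
  assert (E3 : RInt (fun t => x * gg x t + -1 * gg (x + 1) t) u v = exp (x * ln v - v) - exp (x * ln u - u)).
  { apply is_RInt_unique.
    apply (RIntD (fun t => exp (x * ln t - t))).
    - intros t Ht. assert (0 < Rmin u v) by (apply Rmin_pos; auto).
      auto_derive. lra. unfold gg.
      replace (x + 1 - 1) with x by ring.
      replace ((x - 1) * ln t - t) with ((x * ln t - t) + - ln t) by ring.
      rewrite (exp_plus (x * ln t - t) (- ln t)), exp_Ropp, exp_ln by lra.
      replace (x * ln t + - t) with (x * ln t - t) by ring. field. lra.
    - intros t Ht. assert (0 < Rmin u v) by (apply Rmin_pos; auto).
      apply contd. unfold gg. auto_derive. lra. }
  lra.
Qed.

Lemma Gamma_rec x : 0 < x -> Gamma (x + 1) = x * Gamma x.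
Proof.
  intros Hx.
  assert (H1 := Gamma_lim (x+1) ltac:(lra)).
  assert (H2 : is_lim_seq (sq (x + 1)) (x * Gamma x + 0 - 0)).
  { apply is_lim_seq_ext with (u := fun n => x * sq x n + exp (x * ln (/ (INR n + 1)) - / (INR n + 1))
                 - exp (x * ln (INR n + 1) - (INR n + 1))).
    intros n; symmetry; apply sq_rec; auto.
    apply is_lim_seq_minus'. apply is_lim_seq_plus'.
    apply (is_lim_seq_scal_l _ x (Gamma x)). apply Gamma_lim; auto.
    apply Fb_bot; auto. apply Fb_top. }
  assert (E := is_lim_seq_unique _ _ H1). rewrite (is_lim_seq_unique _ _ H2) in E.
  injection E. intros; lra.
Qed.

Lemma exp_convex lam p q : 0 <= lam <= 1 ->
  exp (lam * p + (1 - lam) * q) <= lam * exp p + (1 - lam) * exp q.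
Proof.
  intros Hl. set (m := lam * p + (1 - lam) * q).
  assert (Hp : exp p >= exp m * (1 + (p - m))).
  { replace p with (m + (p - m)) at 1 by ring. rewrite exp_plus.
    generalize (exp_ineq1_le (p - m)) (exp_pos m). intros. nra. }
  assert (Hq : exp q >= exp m * (1 + (q - m))).
  { replace q with (m + (q - m)) at 1 by ring. rewrite exp_plus.
    generalize (exp_ineq1_le (q - m)) (exp_pos m). intros. nra. }
  assert (lam * (exp m * (1 + (p - m))) + (1 - lam) * (exp m * (1 + (q - m))) = exp m)
    by (unfold m; ring).
  nra.
Qed.

Definition LG (x : R) := ln (Gamma x).

Lemma LG_convex x y lam : 0 < x -> 0 < y -> 0 <= lam <= 1 ->
  LG (lam * x + (1 - lam) * y) <= lam * LG x + (1 - lam) * LG y.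
Proof.
  intros Hx Hy Hl. set (z := lam * x + (1 - lam) * y).
  assert (Hz : 0 < z).
  { unfold z. destruct (Rle_lt_or_eq_dec 0 lam (proj1 Hl)). nra. subst; lra. }
  set (a := LG x). set (b := LG y). set (E := exp (lam * a + (1 - lam) * b)).
  assert (Hpt : forall t, 0 < t -> gg z t <= E * (lam * exp (- a) * gg x t + (1 - lam) * exp (- b) * gg y t)).
  { intros t Ht. unfold gg, E.
    replace ((z - 1) * ln t - t) with ((lam * a + (1 - lam) * b) +
       (lam * ((x - 1) * ln t - t - a) + (1 - lam) * ((y - 1) * ln t - t - b))) by (unfold z; ring).
    rewrite exp_plus. apply Rmult_le_compat_l. left; apply exp_pos.
    eapply Rle_trans. apply exp_convex; auto.
    replace ((x - 1) * ln t - t - a) with (- a + ((x - 1) * ln t - t)) by ring.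
    replace ((y - 1) * ln t - t - b) with (- b + ((y - 1) * ln t - t)) by ring.
    rewrite !exp_plus. right; ring. }
  assert (Hn : forall n, sq z n <= E * (lam * exp (- a) * sq x n + (1 - lam) * exp (- b) * sq y n)).
  { intros n. unfold sq. generalize (pos_INR n); intro.
    assert (Hu : 0 < / (INR n + 1)) by (apply Rinv_0_lt_compat; lra).
    rewrite <- RInt_lin by (apply gg_ex; lra).
    apply Rle_trans with (RInt (fun t => E * (lam * exp (- a) * gg x t + (1 - lam) * exp (- b) * gg y t))
       (/ (INR n + 1)) (INR n + 1)).
    - apply RInt_le.
      + apply Rle_trans with 1; [|lra]. rewrite <- Rinv_1. apply Rinv_le_contravar; lra.
      + apply gg_ex; lra.
      + apply exRc. intros t Ht. assert (0 < Rmin (/ (INR n + 1)) (INR n + 1)) by (apply Rmin_pos; lra).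
        apply contd. unfold gg. auto_derive. lra.
      + intros t Ht. apply Hpt. lra.
    - right. apply (RInt_scal (V := R_CompleteNormedModule)
        (fun t => lam * exp (- a) * gg x t + (1 - lam) * exp (- b) * gg y t)).
      apply exRc. intros t Ht. assert (0 < Rmin (/ (INR n + 1)) (INR n + 1)) by (apply Rmin_pos; lra).
      apply contd. unfold gg. auto_derive. lra. }
  assert (Hl2 : is_lim_seq (fun n => E * (lam * exp (- a) * sq x n + (1 - lam) * exp (- b) * sq y n))
                  (E * (lam * exp (- a) * Gamma x + (1 - lam) * exp (- b) * Gamma y))).
  { apply (is_lim_seq_scal_l _ E (lam * exp (- a) * Gamma x + (1 - lam) * exp (- b) * Gamma y)).
    apply is_lim_seq_plus'; apply lim_scal; apply Gamma_lim; auto. }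
  assert (Hle := is_lim_seq_le _ _ _ _ Hn (Gamma_lim z Hz) Hl2). simpl in Hle.
  assert (Ha : exp (- a) * Gamma x = 1).
  { unfold a, LG. rewrite exp_Ropp, exp_ln by (apply Gamma_pos; auto). field.
    apply Rgt_not_eq, Gamma_pos; auto. }
  assert (Hb : exp (- b) * Gamma y = 1).
  { unfold b, LG. rewrite exp_Ropp, exp_ln by (apply Gamma_pos; auto). field.
    apply Rgt_not_eq, Gamma_pos; auto. }
  replace (E * (lam * exp (- a) * Gamma x + (1 - lam) * exp (- b) * Gamma y)) with E in Hle
    by (rewrite !Rmult_assoc, Ha, Hb; ring).
  unfold LG at 1. unfold E in Hle.
  rewrite <- (ln_exp (lam * a + (1 - lam) * b)).
  apply ln_le. apply Gamma_pos; auto. auto.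
Qed.

Lemma LG_rec x : 0 < x -> LG (x + 1) = LG x + ln x.
Proof.
  intros Hx. unfold LG. rewrite Gamma_rec by auto.
  rewrite ln_mult by (auto; apply Gamma_pos; auto). ring.
Qed.

Lemma LG_slope s t u : 0 < s -> s < t -> t < u ->
  (LG t - LG s) * (u - t) <= (LG u - LG t) * (t - s).
Proof.
  intros Hs Hst Htu.
  set (lam := (u - t) / (u - s)).
  assert (Hl : 0 <= lam <= 1).
  { unfold lam. split. apply Rmult_le_pos; [lra|]. left; apply Rinv_0_lt_compat; lra.
    apply Rmult_le_reg_r with (u - s); [lra|]. unfold Rdiv. rewrite Rmult_assoc, Rinv_l by lra. lra. }
  assert (Ht : lam * s + (1 - lam) * u = t) by (unfold lam; field; lra).
  assert (H := LG_convex s u lam Hs ltac:(lra) Hl). rewrite Ht in H.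
  assert (H2 : (u - s) * LG t <= (u - s) * (lam * LG s + (1 - lam) * LG u)).
  { apply Rmult_le_compat_l; lra. }
  replace ((u - s) * (lam * LG s + (1 - lam) * LG u)) with ((u - t) * LG s + (t - s) * LG u) in H2
    by (unfold lam; field; lra).
  nra.
Qed.

Lemma wendel_bounds y c : 1 < y -> 0 < c ->
  c * ln (y - 1) <= LG (y + c) - LG y <= c * ln (y + c).
Proof.
  intros Hy Hc. split.
  - assert (H := LG_slope (y - 1) y (y + c) ltac:(lra) ltac:(lra) ltac:(lra)).
    assert (E := LG_rec (y - 1) ltac:(lra)). replace (y - 1 + 1) with y in E by ring.
    replace (y - (y - 1)) with 1 in H by ring. replace (y + c - y) with c in H by ring.
    rewrite E in H. lra.
  - assert (H := LG_slope y (y + c) (y + c + 1) ltac:(lra) ltac:(lra) ltac:(lra)).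
    assert (E := LG_rec (y + c) ltac:(lra)).
    replace (y + c + 1 - (y + c)) with 1 in H by ring. replace (y + c - y) with c in H by ring.
    rewrite E in H. lra.
Qed.

Fixpoint sumn (f : nat -> R) (n : nat) : R :=
  match n with O => 0 | S n => sumn f n + f n end.

Lemma sumn_ext f g n : (forall j, (j < n)%nat -> f j = g j) -> sumn f n = sumn g n.
Proof.
  induction n; simpl; intros H; auto. rewrite IHn, H; auto.
Qed.

Lemma sumn_plus f g n : sumn (fun j => f j + g j) n = sumn f n + sumn g n.
Proof. induction n; simpl. ring. rewrite IHn; ring. Qed.

Lemma sumn_scal a f n : sumn (fun j => a * f j) n = a * sumn f n.
Proof. induction n; simpl. ring. rewrite IHn; ring. Qed.

Lemma sumn_minus f g n : sumn (fun j => f j - g j) n = sumn f n - sumn g n.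
Proof. induction n; simpl. ring. rewrite IHn; ring. Qed.

Lemma sumn_le f g n : (forall j, (j < n)%nat -> f j <= g j) -> sumn f n <= sumn g n.
Proof.
  induction n; simpl; intros H. lra. apply Rplus_le_compat. apply IHn; auto. apply H; auto.
Qed.

Lemma sumn_abs f n : Rabs (sumn f n) <= sumn (fun j => Rabs (f j)) n.
Proof.
  induction n; simpl. rewrite Rabs_R0; lra.
  eapply Rle_trans. apply Rabs_triang. lra.
Qed.

Lemma LG_shift x N : 0 < x -> LG x = LG (x + INR N) - sumn (fun j => ln (x + INR j)) N.
Proof.
  intros Hx. induction N. simpl. rewrite Rplus_0_r; ring.
  rewrite S_INR. cbn [sumn]. replace (x + (INR N + 1)) with ((x + INR N) + 1) by ring.
  rewrite LG_rec by (generalize (pos_INR N); lra). lra.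
Qed.

Lemma Rabs_le_inv a b : Rabs a <= b -> - b <= a <= b.
Proof. unfold Rabs; destruct (Rcase_abs a); intros; lra. Qed.

Lemma lim_by_bound (u : nat -> R) (l K : R) :
  (forall n, Rabs (u n - l) <= K / (INR n + 1)) -> is_lim_seq u l.
Proof.
  intros H.
  assert (H0 : is_lim_seq (fun n => K / (INR n + 1)) 0).
  { replace 0 with (K * 0) by ring. apply lim_scal.
    apply (is_lim_seq_inv _ _ lim_INR1). discriminate. }
  apply is_lim_seq_le_le with (u := fun n => l - K / (INR n + 1)) (w := fun n => l + K / (INR n + 1)).
  - intros n. specialize (H n). apply Rabs_le_inv in H. lra.
  - replace (Finite l) with (Finite (l - 0)) by (f_equal; ring). apply is_lim_seq_minus'.
    apply is_lim_seq_const. auto.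
  - replace (Finite l) with (Finite (l + 0)) by (f_equal; ring). apply is_lim_seq_plus'.
    apply is_lim_seq_const. auto.
Qed.

Lemma ln1p_le u : -1 < u -> ln (1 + u) <= u.
Proof.
  intros Hu. generalize (exp_ineq1_le (ln (1 + u))). rewrite exp_ln by lra. lra.
Qed.

Lemma ln1p_pos u : 0 <= u -> 0 <= ln (1 + u).
Proof. intros Hu. rewrite <- ln_1. apply ln_le; lra. Qed.

Definition G0 (n : nat) (x : R) :=
  LG (INR n + 2) + x * ln (INR n + 2) - sumn (fun j => ln (x + INR j)) (n + 2).

Lemma G0_lim x : 0 < x -> is_lim_seq (fun n => G0 n x) (LG x).
Proof.
  intros Hx. apply lim_by_bound with (K := x * x + x).
  intros n. generalize (pos_INR n); intro.
  set (N := INR n + 2).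
  assert (HN : INR (n + 2) = N) by (unfold N; rewrite plus_INR; simpl; ring).
  unfold G0. fold N. rewrite (LG_shift x (n + 2)) by auto. rewrite HN.
  replace (LG N + x * ln N - sumn (fun j : nat => ln (x + INR j)) (n + 2) -
     (LG (x + N) - sumn (fun j : nat => ln (x + INR j)) (n + 2)))
    with (- (LG (N + x) - LG N - x * ln N)) by (rewrite (Rplus_comm x N); ring).
  rewrite Rabs_Ropp.
  assert (Hw := wendel_bounds N x ltac:(unfold N; lra) Hx).
  assert (HNp : 1 < N) by (unfold N; lra).
  assert (Hxn : 0 < x / N) by (apply Rdiv_lt_0_compat; lra).
  assert (H1n : 0 < 1 / (N - 1)) by (apply Rdiv_lt_0_compat; lra).
  assert (E1 : ln (N + x) = ln N + ln (1 + x / N)).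
  { rewrite <- ln_mult by lra.
    f_equal. field. lra. }
  assert (E2 : ln N = ln (N - 1) + ln (1 + 1 / (N - 1))).
  { rewrite <- ln_mult by lra.
    f_equal. field. lra. }
  assert (B1 : ln (1 + x / N) <= x / N) by (apply ln1p_le; assert (0 < x / N) by (apply Rdiv_lt_0_compat; unfold N; lra); lra).
  assert (B1' : 0 <= ln (1 + x / N)) by (apply ln1p_pos; left; apply Rdiv_lt_0_compat; unfold N; lra).
  assert (B2 : ln (1 + 1 / (N - 1)) <= 1 / (N - 1)) by (apply ln1p_le; assert (0 < 1 / (N-1)) by (apply Rdiv_lt_0_compat; unfold N; lra); lra).
  assert (B2' : 0 <= ln (1 + 1 / (N - 1))) by (apply ln1p_pos; left; apply Rdiv_lt_0_compat; unfold N; lra).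
  assert (C1 : x / N <= x / (INR n + 1)).
  { apply Rmult_le_compat_l; [lra|]. apply Rinv_le_contravar; unfold N; lra. }
  assert (C2 : 1 / (N - 1) = 1 / (INR n + 1)) by (unfold N; f_equal; ring).
  assert (C3 : x * (x / (INR n + 1)) + x * (1 / (INR n + 1)) = (x * x + x) / (INR n + 1)) by (field; lra).
  assert (U : LG (N + x) - LG N - x * ln N <= x * ln (1 + x / N)).
  { destruct Hw as [_ Hw]. rewrite E1 in Hw. lra. }
  assert (Lw : - (x * ln (1 + 1 / (N - 1))) <= LG (N + x) - LG N - x * ln N).
  { destruct Hw as [Hw _]. rewrite E2. lra. }
  assert (D1 : x * ln (1 + 1 / (N - 1)) <= x * (1 / (INR n + 1))).
  { rewrite <- C2. apply Rmult_le_compat_l; lra. }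
  assert (D2 : x * ln (1 + x / N) <= x * (x / (INR n + 1))).
  { apply Rmult_le_compat_l; lra. }
  assert (0 <= x * (x / (INR n + 1))) by (apply Rmult_le_pos; [lra|]; apply Rdiv_le_0_compat; lra).
  assert (0 <= x * (1 / (INR n + 1))) by (apply Rmult_le_pos; [lra|]; apply Rdiv_le_0_compat; lra).
  apply Rabs_le. lra.
Qed.

Lemma Rabs_lt_inv a b : Rabs a < b -> - b < a < b.
Proof. unfold Rabs; destruct (Rcase_abs a); intros; lra. Qed.

Definition Phi (m : nat) (t : R) : R :=
  match m with O => - ln t | S k => (-1) ^ (S k) * INR (fact k) * / t ^ (S k) end.

Lemma Phi_deriv m t : 0 < t -> is_derive (Phi m) t (Phi (S m) t).
Proof.
  intros Ht. destruct m as [|k].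
  - unfold Phi. auto_derive. lra. simpl. field. lra.
  - unfold Phi. auto_derive.
    + change (t * t ^ k) with (t ^ (S k)). apply pow_nonzero; lra.
    + change (match k with | 0%nat => 1 | S _ => INR k + 1 end) with (INR (S k)).
      rewrite fact_simpl, mult_INR. simpl pow.
      assert (t ^ k <> 0) by (apply pow_nonzero; lra).
      field. split; lra.
Qed.

Lemma Phi_bound m t s : 0 < s -> s <= t ->
  Rabs (Phi (S m) t) <= INR (fact m) / s ^ (S m).
Proof.
  intros Hs Hst. unfold Phi. rewrite !Rabs_mult, pow_1_abs, Rmult_1_l.
  rewrite Rabs_right by (apply Rle_ge, pos_INR).
  rewrite Rabs_right by (left; apply Rinv_0_lt_compat, pow_lt; lra).
  apply Rmult_le_compat_l. apply pos_INR.
  apply Rinv_le_contravar. apply pow_lt; lra. apply pow_incr; lra.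
Qed.


Lemma sum_sq_bound z N : 0 < z ->
  sumn (fun j => / (z + INR j) ^ 2) (S N) <= / z ^ 2 + / z - / (z + INR N).
Proof.
  intros Hz. induction N.
  - simpl. rewrite Rplus_0_r. lra.
  - cbn [sumn] in *. rewrite S_INR.
    generalize (pos_INR N); intro.
    assert (/ (z + (INR N + 1)) ^ 2 <= / (z + INR N) - / (z + (INR N + 1))).
    { replace (/ (z + INR N) - / (z + (INR N + 1))) with (/ ((z + INR N) * (z + INR N + 1))) by (field; lra).
      apply Rinv_le_contravar. nra. simpl. nra. }
    lra.
Qed.

Lemma term_quad m x y j : 0 < x -> Rabs (y - x) < x / 2 ->
  Rabs (Phi m (y + INR j) - Phi m (x + INR j) - (y - x) * Phi (S m) (x + INR j))
  <= INR (fact (S m)) * / (x / 2) ^ m * / (x / 2 + INR j) ^ 2 * (y - x) ^ 2.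
Proof.
  intros Hx Hy. apply Rabs_lt_inv in Hy. generalize (pos_INR j); intro.
  set (z := x / 2).
  assert (Hz : 0 < z) by (unfold z; lra).
  replace ((y - x) * Phi (S m) (x + INR j)) with ((y + INR j - (x + INR j)) * Phi (S m) (x + INR j)) by ring.
  eapply Rle_trans.
  - apply (quad_bound (Phi m) (Phi (S m)) (Phi (S (S m))) (z + INR j) (2 * x + INR j)
             (INR (fact (S m)) / (z + INR j) ^ (S (S m)))).
    + intros t Ht. apply Phi_deriv. lra.
    + intros t Ht. apply Phi_deriv. lra.
    + intros t Ht. apply Phi_bound. lra. lra.
    + unfold z; lra.
    + unfold z; lra.
  - replace (y + INR j - (x + INR j)) with (y - x) by ring.
    apply Rmult_le_compat_r. apply pow2_ge_0.
    unfold Rdiv. rewrite !Rmult_assoc. apply Rmult_le_compat_l. apply pos_INR.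
    rewrite <- Rinv_mult.
    apply Rinv_le_contravar.
    + apply Rmult_lt_0_compat; apply pow_lt; lra.
    + replace (S (S m)) with (m + 2)%nat by lia. rewrite pow_add.
      apply Rmult_le_compat_r. apply pow2_ge_0. apply pow_incr. lra.
Qed.

Definition Acoef (m n : nat) (x : R) : R :=
  match m with
  | O => LG (INR n + 2) + x * ln (INR n + 2)
  | S O => ln (INR n + 2)
  | _ => 0
  end.

Definition Fl (m n : nat) (x : R) : R := Acoef m n x + sumn (fun j => Phi m (x + INR j)) (n + 2).

Lemma Fl0 n x : Fl 0 n x = G0 n x.
Proof.
  unfold Fl, G0, Acoef. unfold Phi.
  replace (sumn (fun j => - ln (x + INR j)) (n + 2)) with ((-1) * sumn (fun j => ln (x + INR j)) (n + 2)).
  ring. rewrite <- sumn_scal. apply sumn_ext. intros; ring.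
Qed.

Lemma Acoef_lin m n x y : Acoef m n y - Acoef m n x - (y - x) * Acoef (S m) n x = 0.
Proof. destruct m as [|[|m]]; simpl; ring. Qed.

Lemma Fl_quad m n x y : 0 < x -> Rabs (y - x) < x / 2 ->
  Rabs (Fl m n y - Fl m n x - (y - x) * Fl (S m) n x)
  <= (INR (fact (S m)) * / (x / 2) ^ m * (/ (x / 2) ^ 2 + / (x / 2))) * (y - x) ^ 2.
Proof.
  intros Hx Hy.
  assert (E : Fl m n y - Fl m n x - (y - x) * Fl (S m) n x =
     sumn (fun j => Phi m (y + INR j) - Phi m (x + INR j) - (y - x) * Phi (S m) (x + INR j)) (n + 2)).
  { unfold Fl. rewrite !sumn_minus, sumn_scal.
    generalize (Acoef_lin m n x y). intro. lra. }
  rewrite E. eapply Rle_trans. apply sumn_abs.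
  eapply Rle_trans. apply sumn_le. intros j _. apply term_quad; auto.
  set (C := INR (fact (S m)) * / (x / 2) ^ m).
  assert (HC : 0 <= C).
  { unfold C. apply Rmult_le_pos. apply pos_INR. left; apply Rinv_0_lt_compat, pow_lt; lra. }
  replace (sumn (fun j => C * / (x / 2 + INR j) ^ 2 * (y - x) ^ 2) (n + 2))
    with (C * (y - x) ^ 2 * sumn (fun j => / (x / 2 + INR j) ^ 2) (n + 2)).
  2:{ rewrite <- sumn_scal. apply sumn_ext. intros; ring. }
  replace (n + 2)%nat with (S (n + 1)) by lia.
  assert (H1 := sum_sq_bound (x / 2) (n + 1) ltac:(lra)).
  assert (0 < / (x / 2 + INR (n + 1))) by (apply Rinv_0_lt_compat; generalize (pos_INR (n+1)); lra).
  assert (0 <= C * (y - x) ^ 2) by (apply Rmult_le_pos; auto; apply pow2_ge_0).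
  apply Rle_trans with (C * (y - x) ^ 2 * (/ (x / 2) ^ 2 + / (x / 2))).
  - apply Rmult_le_compat_l; auto. lra.
  - right; ring.
Qed.

Definition Psi (m : nat) (x : R) : R := real (Lim_seq (fun n => Fl m n x)).

Lemma Psi_spec_of m x (l : R) : is_lim_seq (fun n => Fl m n x) l -> Psi m x = l.
Proof. intros H. unfold Psi. rewrite (is_lim_seq_unique _ _ H). reflexivity. Qed.

Lemma level m : forall x, 0 < x ->
  is_lim_seq (fun n => Fl m n x) (Psi m x) /\ is_derive (Psi m) x (Psi (S m) x).
Proof.
  assert (Hlim : forall m x, 0 < x -> is_lim_seq (fun n => Fl m n x) (Psi m x)).
  { induction m0; intros x Hx.
    - assert (H := G0_lim x Hx).
      assert (H' : is_lim_seq (fun n => Fl 0 n x) (LG x)).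
      { apply is_lim_seq_ext with (fun n => G0 n x); auto. intros; rewrite Fl0; auto. }
      rewrite (Psi_spec_of _ _ _ H'). auto.
    - destruct (GL (Fl m0) (Fl (S m0)) (Psi m0) x (x / 2)
          (INR (fact (S m0)) * / (x / 2) ^ m0 * (/ (x / 2) ^ 2 + / (x / 2)))) as [D [HD _]].
      + lra.
      + intros y Hy. apply IHm0. apply Rabs_lt_inv in Hy. lra.
      + intros n y Hy. apply Fl_quad; auto.
      + rewrite (Psi_spec_of _ _ _ HD). auto. }
  intros x Hx. split. auto.
  destruct (GL (Fl m) (Fl (S m)) (Psi m) x (x / 2)
          (INR (fact (S m)) * / (x / 2) ^ m * (/ (x / 2) ^ 2 + / (x / 2)))) as [D [HD Hder]].
  - lra.
  - intros y Hy. apply Hlim. apply Rabs_lt_inv in Hy; lra.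
  - intros n y Hy. apply Fl_quad; auto.
  - rewrite (Psi_spec_of _ _ _ HD). auto.
Qed.

Lemma loc_pos x (P : R -> Prop) : 0 < x -> (forall t, 0 < t -> P t) -> locally x P.
Proof.
  intros Hx H. exists (mkposreal x Hx). intros t Ht. apply H.
  unfold ball in Ht; simpl in Ht; unfold AbsRing_ball, abs, minus, plus, opp in Ht; simpl in Ht.
  apply Rabs_lt_inv in Ht. lra.
Qed.

Lemma Psi0 x : 0 < x -> Psi 0 x = LG x.
Proof.
  intros Hx. apply Psi_spec_of.
  apply is_lim_seq_ext with (fun n => G0 n x). intros; rewrite Fl0; auto. apply G0_lim; auto.
Qed.

Lemma digamma_Psi x : 0 < x -> digamma x = Psi 1 x.
Proof.
  intros Hx. unfold digamma.
  assert (E : Derive Gamma x = Gamma x * Psi 1 x).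
  { rewrite (Derive_ext_loc Gamma (fun t => exp (Psi 0 t))).
    - apply is_derive_unique.
      assert (H := is_derive_comp exp (Psi 0) x (exp (Psi 0 x)) (Psi 1 x)).
      replace (Gamma x * Psi 1 x) with (scal (Psi 1 x) (exp (Psi 0 x))).
      apply H. apply is_derive_Reals. apply derivable_pt_lim_exp.
      apply (proj2 (level 0 x Hx)).
      rewrite Psi0, Rmult_comm by auto. unfold LG. rewrite exp_ln by (apply Gamma_pos; auto).
      reflexivity.
    - apply loc_pos; auto. intros t Ht. rewrite Psi0 by auto. unfold LG.
      rewrite exp_ln by (apply Gamma_pos; auto). reflexivity. }
  rewrite E. field. apply Rgt_not_eq, Gamma_pos; auto.
Qed.

Lemma polygamma_Psi m : forall x, 0 < x -> polygamma m x = Psi (S m) x.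
Proof.
  unfold polygamma. induction m; intros x Hx.
  - simpl. apply digamma_Psi; auto.
  - simpl. rewrite (Derive_ext_loc _ (Psi (S m))).
    + apply is_derive_unique. apply (proj2 (level (S m) x Hx)).
    + apply loc_pos; auto.
Qed.

Section Econv.
Variables (f f1 f2 : R -> R).
Hypothesis Hf1 : forall t, 0 < t -> is_derive f t (f1 t).
Hypothesis Hf2 : forall t, 0 < t -> is_derive f1 t (f2 t).
Hypothesis Hdec : forall s t, 0 < s -> s < t -> f2 t < f2 s.

Lemma gchord y q p : 0 < q -> q < p -> p < y ->
  p * (f (y - q) - f (y + q)) < q * (f (y - p) - f (y + p)).
Proof.
  intros Hq Hqp Hpy.
  set (g := fun s => f (y - s) - f (y + s)).
  set (g1 := fun s => - f1 (y - s) - f1 (y + s)).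
  set (g2 := fun s => f2 (y - s) - f2 (y + s)).
  assert (Hg1 : forall s, 0 <= s <= p -> derivable_pt_lim g s (g1 s)).
  { intros s Hs. apply is_derive_Reals. unfold g, g1.
    replace (- f1 (y - s) - f1 (y + s)) with ((-1) * f1 (y - s) - 1 * f1 (y + s)) by ring.
    apply (is_derive_minus (fun s => f (y - s)) (fun s => f (y + s))).
    - apply (is_derive_comp f (fun s => y - s) s (f1 (y - s)) (-1)).
      apply Hf1; lra. auto_derive; auto; ring.
    - apply (is_derive_comp f (fun s => y + s) s (f1 (y + s)) 1).
      apply Hf1; lra. auto_derive; auto; ring. }
  assert (Hg2 : forall s, 0 <= s <= p -> derivable_pt_lim g1 s (g2 s)).
  { intros s Hs. apply is_derive_Reals. unfold g1, g2.
    replace (f2 (y - s) - f2 (y + s)) with (- ((-1) * f2 (y - s)) - 1 * f2 (y + s)) by ring.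
    apply (is_derive_minus (fun s => - f1 (y - s)) (fun s => f1 (y + s))).
    - apply (is_derive_opp (fun s => f1 (y - s))).
      apply (is_derive_comp f1 (fun s => y - s) s (f2 (y - s)) (-1)).
      apply Hf2; lra. auto_derive; auto; ring.
    - apply (is_derive_comp f1 (fun s => y + s) s (f2 (y + s)) 1).
      apply Hf2; lra. auto_derive; auto; ring. }
  destruct (MVT_cor2 g g1 0 q Hq) as [x1 [E1 H1]].
  { intros s Hs. apply Hg1. lra. }
  destruct (MVT_cor2 g g1 q p Hqp) as [x2 [E2 H2]].
  { intros s Hs. apply Hg1. lra. }
  destruct (MVT_cor2 g1 g2 x1 x2 ltac:(lra)) as [x3 [E3 H3]].
  { intros s Hs. apply Hg2. lra. }
  assert (Hg0 : g 0 = 0) by (unfold g; rewrite Rminus_0_r, Rplus_0_r; ring).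
  assert (Hg2p : 0 < g2 x3) by (unfold g2; apply Rlt_0_minus, Hdec; lra).
  assert (Hd : g1 x1 < g1 x2).
  { assert (0 < g2 x3 * (x2 - x1)) by (apply Rmult_lt_0_compat; lra). lra. }
  change (p * g q < q * g p).
  rewrite Hg0, Rminus_0_r in E1.
  assert (Eq : g p = g q + g1 x2 * (p - q)) by lra.
  rewrite Eq, E1.
  assert (0 < q * (p - q) * (g1 x2 - g1 x1)).
  { apply Rmult_lt_0_compat. apply Rmult_lt_0_compat; lra. lra. }
  nra.
Qed.

Definition Eexp (c x : R) :=
  (1 - c) * f x - (1 + c) * f (x + c) + (1 + c) * f (x + 1) - (1 - c) * f (x + 1 + c).

Lemma Epos c x : 0 < x -> 0 < c < 1 -> 0 < Eexp c x.
Proof.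
  intros Hx Hc.
  set (y := x + (1 + c) / 2).
  assert (H := gchord y ((1 - c) / 2) ((1 + c) / 2) ltac:(lra) ltac:(lra) ltac:(unfold y; lra)).
  unfold Eexp.
  replace (y - (1 - c) / 2) with (x + c) in H by (unfold y; field).
  replace (y + (1 - c) / 2) with (x + 1) in H by (unfold y; field).
  replace (y - (1 + c) / 2) with x in H by (unfold y; field).
  replace (y + (1 + c) / 2) with (x + 1 + c) in H by (unfold y; field).
  lra.
Qed.

Lemma Eneg c x : 0 < x -> 1 < c -> Eexp c x < 0.
Proof.
  intros Hx Hc.
  set (y := x + (1 + c) / 2).
  assert (H := gchord y ((c - 1) / 2) ((1 + c) / 2) ltac:(lra) ltac:(lra) ltac:(unfold y; lra)).
  unfold Eexp.
  replace (y - (c - 1) / 2) with (x + 1) in H by (unfold y; field).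
  replace (y + (c - 1) / 2) with (x + c) in H by (unfold y; field).
  replace (y - (1 + c) / 2) with x in H by (unfold y; field).
  replace (y + (1 + c) / 2) with (x + 1 + c) in H by (unfold y; field).
  lra.
Qed.

End Econv.

Lemma pow_lt_S s t n : 0 <= s < t -> s ^ (S n) < t ^ (S n).
Proof.
  intros H. induction n.
  - simpl. lra.
  - change (s ^ S (S n)) with (s * s ^ S n). change (t ^ S (S n)) with (t * t ^ S n).
    assert (0 <= s ^ S n) by (apply pow_le; lra). nra.
Qed.

Lemma inv_pow_lt s t n : 0 < s < t -> / t ^ (S n) < / s ^ (S n).
Proof.
  intros H. apply Rinv_lt_contravar. apply Rmult_lt_0_compat; apply pow_lt; lra.
  apply pow_lt_S; lra.
Qed.

Definition fk (m : nat) (t : R) := / t ^ (S m).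
Definition fk1 (m : nat) (t : R) := - INR (S m) / t ^ (S (S m)).
Definition fk2 (m : nat) (t : R) := INR (S m) * INR (S (S m)) / t ^ (S (S (S m))).

Lemma fk_d1 m t : 0 < t -> is_derive (fk m) t (fk1 m t).
Proof.
  intros Ht. unfold fk, fk1.
  assert (t ^ m <> 0) by (apply pow_nonzero; lra).
  auto_derive.
  - change (t * t ^ m) with (t ^ S m). apply pow_nonzero; lra.
  - change (match m with | 0%nat => 1 | S _ => INR m + 1 end) with (INR (S m)).
    simpl pow. field. split; lra.
Qed.

Lemma fk_d2 m t : 0 < t -> is_derive (fk1 m) t (fk2 m t).
Proof.
  intros Ht. unfold fk1, fk2.
  assert (t ^ m <> 0) by (apply pow_nonzero; lra).
  auto_derive.
  - change (t * (t * t ^ m)) with (t ^ S (S m)). apply pow_nonzero; lra.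
  - change (match m with | 0%nat => 1 | S _ => INR m + 1 end) with (INR (S m)).
    rewrite !S_INR. simpl pow. field. split; lra.
Qed.

Lemma fk2_dec m s t : 0 < s -> s < t -> fk2 m t < fk2 m s.
Proof.
  intros Hs Hst. unfold fk2, Rdiv. apply Rmult_lt_compat_l.
  apply Rmult_lt_0_compat; apply lt_0_INR; lia.
  apply inv_pow_lt. lra.
Qed.

Lemma fk_decr m s t : 0 < s -> s < t -> fk m t < fk m s.
Proof. intros. unfold fk. apply inv_pow_lt. lra. Qed.

Lemma fk_pos m t : 0 < t -> 0 < fk m t.
Proof. intros. unfold fk. apply Rinv_0_lt_compat, pow_lt; auto. Qed.

Definition Dterm (f : R -> R) (c be x : R) :=
  (1 - c * be) * f x - (1 + c * be) * f (x + c) + (1 + c * be) * f (x + 1) - (1 - c * be) * f (x + 1 + c).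

Lemma tele (f : R -> R) a c be n :
  sumn (fun j => Dterm f c be (a + INR j)) n =
  2 * sumn (fun j => f (a + INR j) - f (a + c + INR j)) n - (f a - f (a + c))
  + (f (a + INR n) - f (a + c + INR n))
  - c * be * (f a + f (a + c) - f (a + INR n) - f (a + c + INR n)).
Proof.
  induction n.
  - simpl. rewrite !Rplus_0_r. ring.
  - cbn [sumn]. rewrite IHn. rewrite S_INR. unfold Dterm.
    replace (a + INR n + c) with (a + c + INR n) by ring.
    replace (a + INR n + 1 + c) with (a + c + (INR n + 1)) by ring.
    replace (a + INR n + 1) with (a + (INR n + 1)) by ring.
    ring.
Qed.

Lemma Dterm_be (f : R -> R) c be be' x :
  Dterm f c be x - Dterm f c be' x = - c * (be - be') * (f x + f (x + c) - f (x + 1) - f (x + 1 + c)).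
Proof. unfold Dterm. ring. Qed.

Lemma Dterm_invc (f : R -> R) c x : 0 < c -> Dterm f c (1 / c) x = 2 * (f (x + 1) - f (x + c)).
Proof.
  intros Hc. unfold Dterm. replace (c * (1 / c)) with 1 by (field; lra).
  replace (x + 1 + c) with (x + 1 + c) by ring. ring.
Qed.

Lemma Dterm_one (f : R -> R) c x : Dterm f c 1 x = Eexp f c x.
Proof. unfold Dterm, Eexp. rewrite Rmult_1_r. ring. Qed.

Lemma pow_ge_self t m : 1 <= t -> t <= t ^ (S m).
Proof.
  intros Ht. induction m. simpl; lra. change (t ^ S (S m)) with (t * t ^ S m). nra.
Qed.

Lemma fk_tail m a : 0 < a -> is_lim_seq (fun n => fk m (a + INR n)) 0.
Proof.
  intros Ha.
  apply lim_by_bound with (K := fk m a + 2).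
  intros n. rewrite Rminus_0_r.
  assert (Hp : 0 < fk m (a + INR n)) by (apply fk_pos; generalize (pos_INR n); lra).
  rewrite Rabs_right by lra.
  destruct n.
  - simpl. rewrite Rplus_0_r. lra.
  - rewrite S_INR. generalize (pos_INR n); intro.
    assert (H1 : fk m (a + (INR n + 1)) <= / (a + (INR n + 1))).
    { unfold fk. apply Rinv_le_contravar. lra.
      apply pow_ge_self. lra. }
    assert (H2 : / (a + (INR n + 1)) <= 2 / (INR n + 1 + 1)).
    { apply Rmult_le_reg_r with ((a + (INR n + 1)) * (INR n + 1 + 1)).
      apply Rmult_lt_0_compat; lra.
      field_simplify; try lra. }
    assert (0 <= fk m a / (INR n + 1 + 1)) by (apply Rdiv_le_0_compat; [left; apply fk_pos|]; lra).
    unfold Rdiv in *. rewrite Rmult_plus_distr_r. lra.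
Qed.

Lemma fact_pos_R m : 0 < INR (fact m).
Proof. apply lt_0_INR. apply lt_O_fact. Qed.

Lemma S_lim m a b : 0 < a -> 0 < b ->
  is_lim_seq (fun n => sumn (fun j => fk m (a + INR j) - fk m (b + INR j)) n)
    ((-1) ^ m * (polygamma m b - polygamma m a) / INR (fact m)).
Proof.
  intros Ha Hb.
  apply (is_lim_seq_incr_n _ 2).
  rewrite !polygamma_Psi by auto.
  assert (Hf := fact_pos_R m).
  apply is_lim_seq_ext with (fun n => (-1) ^ m / INR (fact m) * (Fl (S m) n b - Fl (S m) n a)).
  - intros n. unfold Fl.
    replace (Acoef (S m) n b) with (Acoef (S m) n a) by (destruct m; reflexivity).
    replace (Acoef (S m) n a + sumn (fun j => Phi (S m) (b + INR j)) (n + 2) -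
       (Acoef (S m) n a + sumn (fun j => Phi (S m) (a + INR j)) (n + 2)))
      with (sumn (fun j => Phi (S m) (b + INR j) - Phi (S m) (a + INR j)) (n + 2))
      by (rewrite sumn_minus; ring).
    rewrite <- sumn_scal. apply sumn_ext. intros j _.
    unfold Phi, fk. simpl pow.
    assert ((-1) ^ m * (-1) ^ m = 1).
    { rewrite <- pow_add. replace (m + m)%nat with (2 * m)%nat by lia. rewrite pow_mult.
      replace ((-1) ^ 2) with 1 by (simpl; ring). apply pow1. }
    set (P := (-1) ^ m) in *.
    set (X := / ((b + INR j) * (b + INR j) ^ m)).
    set (Y := / ((a + INR j) * (a + INR j) ^ m)).
    transitivity (P * P * (Y - X)); [field; lra | rewrite H; ring].
  - replace ((-1) ^ m * (Psi (S m) b - Psi (S m) a) / INR (fact m))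
      with ((-1) ^ m / INR (fact m) * (Psi (S m) b - Psi (S m) a)) by (field; lra).
    apply lim_scal. apply is_lim_seq_minus'; apply level; auto.
Qed.

Definition Sv m a b := (-1) ^ m * (polygamma m b - polygamma m a) / INR (fact m).

Lemma Q_lim m a c be : 0 < a -> 0 < c ->
  is_lim_seq (fun n => sumn (fun j => Dterm (fk m) c be (a + INR j)) n)
    (2 * Sv m a (a + c) - (fk m a - fk m (a + c)) - c * be * (fk m a + fk m (a + c))).
Proof.
  intros Ha Hc.
  apply is_lim_seq_ext with (fun n =>
     2 * sumn (fun j => fk m (a + INR j) - fk m (a + c + INR j)) n - (fk m a - fk m (a + c))
     + (fk m (a + INR n) - fk m (a + c + INR n))
     - c * be * (fk m a + fk m (a + c) - fk m (a + INR n) - fk m (a + c + INR n))).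
  { intros n. symmetry. apply tele. }
  assert (H1 := S_lim m a (a + c) Ha ltac:(lra)).
  assert (H2 := fk_tail m a Ha).
  assert (H3 := fk_tail m (a + c) ltac:(lra)).
  replace (2 * Sv m a (a + c) - (fk m a - fk m (a + c)) - c * be * (fk m a + fk m (a + c)))
    with (2 * Sv m a (a + c) - (fk m a - fk m (a + c)) + (0 - 0)
          - c * be * (fk m a + fk m (a + c) - 0 - 0)) by ring.
  apply is_lim_seq_minus'. apply is_lim_seq_plus'. apply is_lim_seq_minus'.
  apply lim_scal. exact H1. apply is_lim_seq_const.
  apply is_lim_seq_minus'; auto.
  apply lim_scal. apply is_lim_seq_minus'. apply is_lim_seq_minus'.
  apply is_lim_seq_const. auto. auto.
Qed.

Lemma lim_pos_terms (d : nat -> R) (l : R) : (forall j, 0 < d j) ->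
  is_lim_seq (fun n => sumn d n) l -> d O <= l.
Proof.
  intros Hd Hl. apply is_lim_seq_incr_1 in Hl.
  assert (H : forall n, d O <= sumn d (S n)).
  { induction n. simpl. lra. cbn [sumn] in *. specialize (Hd (S n)). lra. }
  exact (is_lim_seq_le _ _ _ _ H (is_lim_seq_const _) Hl).
Qed.

Lemma lim_neg_terms (d : nat -> R) (l : R) : (forall j, d j < 0) ->
  is_lim_seq (fun n => sumn d n) l -> l <= d O.
Proof.
  intros Hd Hl. apply is_lim_seq_incr_1 in Hl.
  assert (H : forall n, sumn d (S n) <= d O).
  { induction n. simpl. lra. cbn [sumn] in *. specialize (Hd (S n)). lra. }
  exact (is_lim_seq_le _ _ _ _ H Hl (is_lim_seq_const _)).
Qed.

Lemma dineq_iff m a c be ga : 0 < a -> 0 < c ->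
  double_ineq (S m) a (a + c) be ga <->
  (0 < 2 * Sv m a (a + c) - (fk m a - fk m (a + c)) - c * be * (fk m a + fk m (a + c)) /\
   2 * Sv m a (a + c) - (fk m a - fk m (a + c)) - c * ga * (fk m a + fk m (a + c)) < 0).
Proof.
  intros Ha Hc. unfold double_ineq, Sv, fk.
  replace (S m - 1)%nat with m by lia. replace (a + c - a) with c by ring.
  assert (Hf := fact_pos_R m).
  set (F := INR (fact m)) in *.
  set (P := (-1) ^ m * (polygamma m (a + c) - polygamma m a)).
  set (X := / a ^ S m). set (Y := / (a + c) ^ S m).
  assert (E1 : P / c - F / 2 * ((1 / c + be) * X + (be - 1 / c) * Y)
               = F / (2 * c) * (2 * (P / F) - (X - Y) - c * be * (X + Y))) by (field; lra).
  assert (E2 : F / 2 * ((1 / c + ga) * X + (ga - 1 / c) * Y) - P / c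
               = - (F / (2 * c)) * (2 * (P / F) - (X - Y) - c * ga * (X + Y))) by (field; lra).
  assert (HK : 0 < F / (2 * c)) by (apply Rdiv_lt_0_compat; lra).
  replace (P * / c) with (P / c) by reflexivity.
  split.
  - intros [H1 H2]. split.
    + assert (0 < F / (2 * c) * (2 * (P / F) - (X - Y) - c * be * (X + Y))) by (unfold Rdiv at 1; lra).
      apply (Rmult_lt_reg_l (F / (2 * c))); auto. lra.
    + assert (0 < - (F / (2 * c)) * (2 * (P / F) - (X - Y) - c * ga * (X + Y))) by lra.
      apply (Rmult_lt_reg_l (F / (2 * c))); auto. lra.
  - intros [H1 H2]. split.
    + assert (0 < F / (2 * c) * (2 * (P / F) - (X - Y) - c * be * (X + Y))) by (apply Rmult_lt_0_compat; auto).
      unfold Rdiv in E1 at 1. lra.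
    + assert (0 < F / (2 * c) * - (2 * (P / F) - (X - Y) - c * ga * (X + Y))) by (apply Rmult_lt_0_compat; lra).
      lra.
Qed.

Lemma dineq_of m a c be ga : 0 < a -> 0 < c ->
  (forall x, 0 < x -> 0 < Dterm (fk m) c be x) ->
  (forall x, 0 < x -> Dterm (fk m) c ga x < 0) ->
  double_ineq (S m) a (a + c) be ga.
Proof.
  intros Ha Hc Hb Hg. apply dineq_iff; auto. split.
  - apply Rlt_le_trans with (Dterm (fk m) c be (a + INR 0)).
    + apply Hb. simpl; lra.
    + apply lim_pos_terms with (d := fun j => Dterm (fk m) c be (a + INR j)).
      intros j. apply Hb. generalize (pos_INR j); lra.
      apply Q_lim; auto.
  - apply Rle_lt_trans with (Dterm (fk m) c ga (a + INR 0)).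
    + apply lim_neg_terms with (d := fun j => Dterm (fk m) c ga (a + INR j)).
      intros j. apply Hg. generalize (pos_INR j); lra.
      apply Q_lim; auto.
    + apply Hg. simpl; lra.
Qed.

Lemma W_pos m c x : 0 < x -> 0 < c -> 0 < fk m x + fk m (x + c) - fk m (x + 1) - fk m (x + 1 + c).
Proof.
  intros Hx Hc. assert (fk m (x + 1) < fk m x) by (apply fk_decr; lra).
  assert (fk m (x + 1 + c) < fk m (x + c)) by (apply fk_decr; lra). lra.
Qed.

Lemma Eexp_fk_pos m c x : 0 < x -> 0 < c < 1 -> 0 < Eexp (fk m) c x.
Proof.
  intros. apply Epos with (f1 := fk1 m) (f2 := fk2 m); auto.
  apply fk_d1. apply fk_d2. apply fk2_dec.
Qed.

Lemma Eexp_fk_neg m c x : 0 < x -> 1 < c -> Eexp (fk m) c x < 0.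
Proof.
  intros. apply Eneg with (f1 := fk1 m) (f2 := fk2 m); auto.
  apply fk_d1. apply fk_d2. apply fk2_dec.
Qed.

Lemma if_small m a c be ga : 0 < a -> 0 < c < 1 -> be <= 1 -> ga >= 1 / c ->
  double_ineq (S m) a (a + c) be ga.
Proof.
  intros Ha Hc Hbe Hga. apply dineq_of; try lra.
  - intros x Hx. assert (H := Dterm_be (fk m) c be 1 x). rewrite Dterm_one in H.
    assert (H1 := Eexp_fk_pos m c x Hx Hc). assert (H2 := W_pos m c x Hx ltac:(lra)).
    assert (0 <= - c * (be - 1) * (fk m x + fk m (x + c) - fk m (x + 1) - fk m (x + 1 + c))).
    { replace (- c * (be - 1) * (fk m x + fk m (x + c) - fk m (x + 1) - fk m (x + 1 + c)))
        with (c * (1 - be) * (fk m x + fk m (x + c) - fk m (x + 1) - fk m (x + 1 + c))) by ring.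
      apply Rmult_le_pos; [apply Rmult_le_pos|]; lra. }
    lra.
  - intros x Hx. assert (H := Dterm_be (fk m) c ga (1 / c) x). rewrite Dterm_invc in H by lra.
    assert (H1 : fk m (x + 1) < fk m (x + c)) by (apply fk_decr; lra).
    assert (H2 := W_pos m c x Hx ltac:(lra)).
    assert (0 <= c * (ga - 1 / c) * (fk m x + fk m (x + c) - fk m (x + 1) - fk m (x + 1 + c))).
    { apply Rmult_le_pos; [apply Rmult_le_pos|]; lra. }
    lra.
Qed.

Lemma if_large m a c be ga : 0 < a -> 1 < c -> be <= 1 / c -> ga >= 1 ->
  double_ineq (S m) a (a + c) be ga.
Proof.
  intros Ha Hc Hbe Hga. apply dineq_of; try lra.
  - intros x Hx. assert (H := Dterm_be (fk m) c be (1 / c) x). rewrite Dterm_invc in H by lra.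
    assert (H1 : fk m (x + c) < fk m (x + 1)) by (apply fk_decr; lra).
    assert (H2 := W_pos m c x Hx ltac:(lra)).
    assert (0 <= c * (1 / c - be) * (fk m x + fk m (x + c) - fk m (x + 1) - fk m (x + 1 + c))).
    { apply Rmult_le_pos; [apply Rmult_le_pos|]; lra. }
    lra.
  - intros x Hx. assert (H := Dterm_be (fk m) c ga 1 x). rewrite Dterm_one in H.
    assert (H1 := Eexp_fk_neg m c x Hx Hc). assert (H2 := W_pos m c x Hx ltac:(lra)).
    assert (0 <= c * (ga - 1) * (fk m x + fk m (x + c) - fk m (x + 1) - fk m (x + 1 + c))).
    { apply Rmult_le_pos; [apply Rmult_le_pos|]; lra. }
    lra.
Qed.

Lemma fk0 t : fk 0 t = / t.
Proof. unfold fk. simpl. rewrite Rmult_1_r. reflexivity. Qed.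

Lemma Eexp_fk0 c x : 0 < x -> 0 < c ->
  Eexp (fk 0) c x = c * (1 - c ^ 2) / (x * (x + 1 + c) * (x + c) * (x + 1)).
Proof.
  intros Hx Hc. unfold Eexp. rewrite !fk0. field. repeat split; lra.
Qed.

Lemma tele_inv a n : 0 < a ->
  sumn (fun j => / (a + INR j) - / (a + INR j + 1)) n = / a - / (a + INR n).
Proof.
  intros Ha. induction n.
  - simpl. rewrite Rplus_0_r. ring.
  - cbn [sumn]. rewrite IHn, S_INR. replace (a + (INR n + 1)) with (a + INR n + 1) by ring. ring.
Qed.

Lemma Eexp_abs_bound c x a : 0 < a -> a <= x -> 0 < c ->
  Rabs (Eexp (fk 0) c x) <= c * Rabs (1 - c ^ 2) / a ^ 2 * (/ x - / (x + 1)).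
Proof.
  intros Ha Hax Hc. rewrite Eexp_fk0 by lra.
  replace (/ x - / (x + 1)) with (/ (x * (x + 1))) by (field; lra).
  assert (Hd : 0 < x * (x + 1 + c) * (x + c) * (x + 1)).
  { repeat apply Rmult_lt_0_compat; lra. }
  rewrite Rabs_div by lra. rewrite (Rabs_right (x * (x + 1 + c) * (x + c) * (x + 1))) by lra.
  rewrite Rabs_mult, (Rabs_right c) by lra.
  assert (HA : 0 <= c * Rabs (1 - c ^ 2)) by (apply Rmult_le_pos; [lra|apply Rabs_pos]).
  assert (HI : / (x * (x + 1 + c) * (x + c) * (x + 1)) <= / a ^ 2 * / (x * (x + 1))).
  { rewrite <- Rinv_mult.
    apply Rinv_le_contravar. apply Rmult_lt_0_compat. apply pow_lt; lra. apply Rmult_lt_0_compat; lra.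
    assert (a ^ 2 <= (x + 1 + c) * (x + c)) by (simpl; nra).
    assert (0 < x * (x + 1)) by nra.
    nra. }
  unfold Rdiv. rewrite (Rmult_assoc (c * Rabs (1 - c ^ 2)) (/ a ^ 2)).
  apply Rmult_le_compat_l; auto.
Qed.

Lemma Q1_bound c a : 0 < a -> 0 < c ->
  Rabs (2 * Sv 0 a (a + c) - (fk 0 a - fk 0 (a + c)) - c * 1 * (fk 0 a + fk 0 (a + c)))
  <= c * Rabs (1 - c ^ 2) / a ^ 3.
Proof.
  intros Ha Hc. assert (Hl := Q_lim 0 a c 1 Ha Hc).
  set (K := c * Rabs (1 - c ^ 2) / a ^ 2).
  assert (HK : 0 <= K).
  { unfold K. apply Rdiv_le_0_compat. apply Rmult_le_pos; [lra|apply Rabs_pos]. apply pow_lt; lra. }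
  assert (Hb : forall n, Rabs (sumn (fun j => Dterm (fk 0) c 1 (a + INR j)) n) <= K / a).
  { intros n. eapply Rle_trans. apply sumn_abs.
    eapply Rle_trans. apply sumn_le with (g := fun j => K * (/ (a + INR j) - / (a + INR j + 1))).
    { intros j _. rewrite Dterm_one. apply Eexp_abs_bound; auto. generalize (pos_INR j); lra. }
    rewrite sumn_scal, tele_inv by auto.
    assert (0 < / (a + INR n)) by (apply Rinv_0_lt_compat; generalize (pos_INR n); lra).
    unfold Rdiv. apply Rmult_le_compat_l; auto. lra. }
  assert (H := is_lim_seq_le _ _ _ _ Hb (is_lim_seq_abs _ _ Hl) (is_lim_seq_const _)).
  simpl in H. replace (c * Rabs (1 - c ^ 2) / a ^ 3) with (K / a) by (unfold K; simpl; field; lra).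
  exact H.
Qed.

Lemma Sv_lower m a c : 0 < a -> 0 < c -> fk m a - fk m (a + c) <= Sv m a (a + c).
Proof.
  intros Ha Hc.
  replace (fk m a - fk m (a + c)) with (fk m (a + INR 0) - fk m (a + c + INR 0)) by (simpl; rewrite !Rplus_0_r; auto).
  apply lim_pos_terms with (d := fun j => fk m (a + INR j) - fk m (a + c + INR j)).
  - intros j. generalize (pos_INR j); intro. assert (fk m (a + c + INR j) < fk m (a + INR j)) by (apply fk_decr; lra). lra.
  - apply S_lim; lra.
Qed.

Lemma Sv_upper a c : 0 < a -> 1 < c -> Sv 0 a (a + c) <= / a + c.
Proof.
  intros Ha Hc.
  set (t := fun j => fk 0 (a + INR j) - fk 0 (a + c + INR j)).
  assert (Hn : forall n, sumn t (S n) <= / a + c - c / (INR n + 1)).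
  { induction n.
    - simpl. unfold t. simpl. rewrite !Rplus_0_r, !fk0.
      assert (0 < / (a + c)) by (apply Rinv_0_lt_compat; lra). lra.
    - cbn [sumn] in *.
      assert (Et : t (S n) = / (a + (INR n + 1)) - / (a + c + (INR n + 1))) by (unfold t; rewrite !fk0, S_INR; auto).
      rewrite Et, S_INR.
      generalize (pos_INR n); intro.
      assert (/ (a + (INR n + 1)) - / (a + c + (INR n + 1)) <= c / (INR n + 1) - c / (INR n + 1 + 1)).
      { replace (/ (a + (INR n + 1)) - / (a + c + (INR n + 1))) with (c / ((a + (INR n + 1)) * (a + c + (INR n + 1)))) by (field; lra).
        replace (c / (INR n + 1) - c / (INR n + 1 + 1)) with (c / ((INR n + 1) * (INR n + 1 + 1))) by (field; lra).
        unfold Rdiv. apply Rmult_le_compat_l. lra. apply Rinv_le_contravar. nra. nra. }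
      assert (0 < c / (INR n + 1 + 1)) by (apply Rdiv_lt_0_compat; lra).
      lra. }
  assert (Hl := S_lim 0 a (a + c) Ha ltac:(lra)). apply is_lim_seq_incr_1 in Hl.
  assert (Hb : forall n, sumn t (S n) <= / a + c).
  { intros n. specialize (Hn n). assert (0 < c / (INR n + 1)) by (apply Rdiv_lt_0_compat; generalize (pos_INR n); lra). lra. }
  exact (is_lim_seq_le _ _ _ _ Hb Hl (is_lim_seq_const _)).
Qed.

Lemma get1 c be ga a : 0 < a -> 0 < c -> holds_all c be ga ->
  (0 < 2 * Sv 0 a (a + c) - (fk 0 a - fk 0 (a + c)) - c * be * (fk 0 a + fk 0 (a + c)) /\
   2 * Sv 0 a (a + c) - (fk 0 a - fk 0 (a + c)) - c * ga * (fk 0 a + fk 0 (a + c)) < 0).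
Proof.
  intros Ha Hc H. apply dineq_iff; auto. apply H; auto. lra. ring.
Qed.

Lemma onlyif_small c be ga : 0 < c < 1 -> holds_all c be ga -> be <= 1 /\ ga >= 1 / c.
Proof.
  intros Hc H. split.
  - destruct (Rle_or_lt be 1) as [|Hb]; auto. exfalso.
    set (a := 1 + / (be - 1)).
    assert (Hi : 0 < / (be - 1)) by (apply Rinv_0_lt_compat; lra).
    assert (Ha : 1 < a) by (unfold a; lra).
    destruct (get1 c be ga a ltac:(lra) ltac:(lra) H) as [H1 _].
    assert (HQ := Q1_bound c a ltac:(lra) ltac:(lra)). apply Rabs_le_inv in HQ.
    assert (Hr : Rabs (1 - c ^ 2) <= 1) by (rewrite Rabs_right; simpl; nra).
    rewrite !fk0 in *.
    assert (Hfb : 0 < / (a + c)) by (apply Rinv_0_lt_compat; lra).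
    assert (Ha2 : (be - 1) * a ^ 2 >= 1).
    { assert (a * (be - 1) >= 1).
      { unfold a. replace ((1 + / (be - 1)) * (be - 1)) with (be - 1 + 1) by (field; lra). lra. }
      simpl. nra. }
    assert (E : c * Rabs (1 - c ^ 2) / a ^ 3 <= c * (be - 1) * / a).
    { assert (Hp : 0 < a ^ 3) by (apply pow_lt; lra).
      apply Rmult_le_reg_r with (a ^ 3); auto. unfold Rdiv. rewrite Rmult_assoc, Rinv_l by lra.
      replace (c * (be - 1) * / a * a ^ 3) with (c * ((be - 1) * a ^ 2)) by (simpl; field; lra).
      assert (0 <= Rabs (1 - c^2)) by apply Rabs_pos. nra. }
    assert (0 < c * (be - 1) * / (a + c)) by (apply Rmult_lt_0_compat; [nra|auto]).
    assert (2 * Sv 0 a (a + c) - (/ a - / (a + c)) - c * be * (/ a + / (a + c)) =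
            (2 * Sv 0 a (a + c) - (/ a - / (a + c)) - c * 1 * (/ a + / (a + c)))
            - c * (be - 1) * / a - c * (be - 1) * / (a + c)) by ring.
    lra.
  - destruct (Rle_or_lt (1 / c) ga) as [|Hg]; [lra|]. exfalso.
    assert (Hcg : c * ga < 1).
    { apply Rmult_lt_reg_r with (/ c). apply Rinv_0_lt_compat; lra.
      replace (c * ga * / c) with ga by (field; lra). unfold Rdiv in Hg. lra. }
    set (a := (1 - c * ga) / (2 * (Rabs ga + 1))).
    assert (Hga : 0 <= Rabs ga) by apply Rabs_pos.
    assert (Ha : 0 < a) by (unfold a; apply Rdiv_lt_0_compat; lra).
    destruct (get1 c be ga a Ha ltac:(lra) H) as [_ H2].
    assert (HS := Sv_lower 0 a c Ha ltac:(lra)). rewrite !fk0 in *.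
    assert (Key : (1 - c * ga) * (a + c) - (1 + c * ga) * a >= 0).
    { replace ((1 - c * ga) * (a + c) - (1 + c * ga) * a) with ((1 - c * ga) * c - 2 * c * ga * a) by ring.
      assert (2 * ga * a <= 1 - c * ga).
      { unfold a. replace (2 * ga * ((1 - c * ga) / (2 * (Rabs ga + 1)))) with ((1 - c * ga) * (ga / (Rabs ga + 1))) by (field; lra).
        assert (ga / (Rabs ga + 1) <= 1).
        { apply Rmult_le_reg_r with (Rabs ga + 1). lra. unfold Rdiv. rewrite Rmult_assoc, Rinv_l by lra.
          generalize (RRle_abs ga). lra. }
        nra. }
      nra. }
    assert (E : (1 - c * ga) * / a - (1 + c * ga) * / (a + c) >= 0).
    { replace ((1 - c * ga) * / a - (1 + c * ga) * / (a + c))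
        with (((1 - c * ga) * (a + c) - (1 + c * ga) * a) * / (a * (a + c))) by (field; lra).
      apply Rle_ge, Rmult_le_pos. lra. left; apply Rinv_0_lt_compat; nra. }
    nra.
Qed.

Lemma onlyif_large c be ga : 1 < c -> holds_all c be ga -> be <= 1 / c /\ ga >= 1.
Proof.
  intros Hc H. split.
  - destruct (Rle_or_lt be (1 / c)) as [|Hb]; auto. exfalso.
    assert (Hcb : 1 < c * be).
    { apply Rmult_lt_reg_r with (/ c). apply Rinv_0_lt_compat; lra.
      replace (c * be * / c) with be by (field; lra). unfold Rdiv in Hb. lra. }
    set (a := (c * be - 1) / (2 * c)).
    assert (Ha : 0 < a) by (unfold a; apply Rdiv_lt_0_compat; lra).
    destruct (get1 c be ga a Ha ltac:(lra) H) as [H1 _].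
    assert (HS := Sv_upper a c Ha Hc). rewrite !fk0 in *.
    assert (Hfb : 0 < / (a + c)) by (apply Rinv_0_lt_compat; lra).
    assert (E : (1 - c * be) * / a + 2 * c = 0) by (unfold a; field; lra).
    assert (0 <= (c * be - 1) * / (a + c)) by (apply Rmult_le_pos; lra).
    assert (2 * Sv 0 a (a + c) - (/ a - / (a + c)) - c * be * (/ a + / (a + c)) <=
            (1 - c * be) * / a + 2 * c + (1 - c * be) * / (a + c)) by lra.
    lra.
  - destruct (Rle_or_lt 1 ga) as [|Hg]; [lra|]. exfalso.
    set (a := 1 + (c ^ 2 - 1) / (1 - ga)).
    assert (Hc2 : 0 < c ^ 2 - 1) by (simpl; nra).
    assert (Hq : 0 < (c ^ 2 - 1) / (1 - ga)) by (apply Rdiv_lt_0_compat; lra).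
    assert (Ha : 1 < a) by (unfold a; lra).
    destruct (get1 c be ga a ltac:(lra) ltac:(lra) H) as [_ H2].
    assert (HQ := Q1_bound c a ltac:(lra) ltac:(lra)). apply Rabs_le_inv in HQ.
    rewrite Rabs_left1 in HQ by (simpl; nra).
    rewrite !fk0 in *.
    assert (Hfb : 0 < / (a + c)) by (apply Rinv_0_lt_compat; lra).
    assert (Ha2 : (1 - ga) * a ^ 2 >= c ^ 2 - 1).
    { assert (a * (1 - ga) >= c ^ 2 - 1).
      { unfold a. replace ((1 + (c ^ 2 - 1) / (1 - ga)) * (1 - ga)) with (1 - ga + (c ^ 2 - 1)) by (field; lra). lra. }
      assert (a <= a ^ 2) by (simpl; nra). nra. }
    assert (E : c * - (1 - c ^ 2) / a ^ 3 <= c * (1 - ga) * / a).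
    { assert (Hp : 0 < a ^ 3) by (apply pow_lt; lra).
      apply Rmult_le_reg_r with (a ^ 3); auto. unfold Rdiv. rewrite Rmult_assoc, Rinv_l by lra.
      replace (c * (1 - ga) * / a * a ^ 3) with (c * ((1 - ga) * a ^ 2)) by (simpl; field; lra).
      nra. }
    assert (0 < c * (1 - ga) * / (a + c)) by (apply Rmult_lt_0_compat; [nra|auto]).
    assert (2 * Sv 0 a (a + c) - (/ a - / (a + c)) - c * ga * (/ a + / (a + c)) =
            (2 * Sv 0 a (a + c) - (/ a - / (a + c)) - c * 1 * (/ a + / (a + c)))
            + c * (1 - ga) * / a + c * (1 - ga) * / (a + c)) by ring.
    lra.
Qed.

Definition nln (t : R) := - ln t.
Definition nln1 (t : R) := - / t.
Definition nln2 (t : R) := / t ^ 2.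

Lemma nln_d1 t : 0 < t -> is_derive nln t (nln1 t).
Proof. intros Ht. unfold nln, nln1. auto_derive. lra. field. lra. Qed.
Lemma nln_d2 t : 0 < t -> is_derive nln1 t (nln2 t).
Proof. intros Ht. unfold nln1, nln2. auto_derive. lra. field. lra. Qed.
Lemma nln2_dec s t : 0 < s -> s < t -> nln2 t < nln2 s.
Proof. intros. unfold nln2. apply (inv_pow_lt s t 1). lra. Qed.

Definition Hf (c y : R) := LG (y + c) - LG y - c / 2 * (ln y + ln (y + c)) - / 2 * (ln y - ln (y + c)).

Definition phi (c x : R) := / 2 * ((1 - c) * ln x - (1 + c) * ln (x + c) + (1 + c) * ln (x + 1) - (1 - c) * ln (x + 1 + c)).

Lemma phi_E c x : phi c x = - / 2 * Eexp nln c x.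
Proof. unfold phi, Eexp, nln. cbv beta. field. Qed.

Lemma Hf_step c x : 0 < x -> 0 < c -> Hf c x - Hf c (x + 1) = phi c x.
Proof.
  intros Hx Hc. unfold Hf, phi.
  assert (E1 : LG (x + 1 + c) = LG (x + c) + ln (x + c)).
  { replace (x + 1 + c) with (x + c + 1) by ring. apply LG_rec; lra. }
  rewrite E1, (LG_rec x) by lra. field.
Qed.

Lemma Hf_tele c a n : 0 < a -> 0 < c ->
  sumn (fun j => phi c (a + INR j)) n = Hf c a - Hf c (a + INR n).
Proof.
  intros Ha Hc. induction n.
  - simpl. rewrite Rplus_0_r. ring.
  - cbn [sumn]. rewrite IHn, S_INR. rewrite <- Hf_step by (generalize (pos_INR n); lra).
    replace (a + INR n + 1) with (a + (INR n + 1)) by ring. ring.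
Qed.

Lemma Hf_tail c a : 0 < a -> 0 < c -> is_lim_seq (fun n => Hf c (a + INR n)) 0.
Proof.
  intros Ha Hc. apply (is_lim_seq_incr_n _ 2).
  apply lim_by_bound with (K := c + c * c + Rabs (1 - c) * c / 2).
  intros n. rewrite Rminus_0_r. rewrite plus_INR. simpl INR.
  generalize (pos_INR n); intro.
  set (y := a + (INR n + (1 + 1))).
  assert (Hy : INR n + 1 < y) by (unfold y; lra).
  assert (Hy2 : INR n + 1 <= y - 1) by (unfold y; lra).
  assert (Hw := wendel_bounds y c ltac:(lra) Hc).
  assert (Hcy : 0 < c / y) by (apply Rdiv_lt_0_compat; lra).
  assert (H1y : 0 < 1 / (y - 1)) by (apply Rdiv_lt_0_compat; lra).
  assert (E1 : ln (y + c) = ln y + ln (1 + c / y)).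
  { rewrite <- ln_mult by lra.
    f_equal. field. lra. }
  assert (E2 : ln y = ln (y - 1) + ln (1 + 1 / (y - 1))).
  { rewrite <- ln_mult by lra.
    f_equal. field. lra. }
  assert (B1 : ln (1 + c / y) <= c / y) by (apply ln1p_le; assert (0 < c / y) by (apply Rdiv_lt_0_compat; lra); lra).
  assert (B1' : 0 <= ln (1 + c / y)) by (apply ln1p_pos; left; apply Rdiv_lt_0_compat; lra).
  assert (B2 : ln (1 + 1 / (y - 1)) <= 1 / (y - 1)) by (apply ln1p_le; assert (0 < 1 / (y-1)) by (apply Rdiv_lt_0_compat; lra); lra).
  assert (B2' : 0 <= ln (1 + 1 / (y - 1))) by (apply ln1p_pos; left; apply Rdiv_lt_0_compat; lra).
  assert (C1 : c / y <= c / (INR n + 1)).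
  { apply Rmult_le_compat_l; [lra|]. apply Rinv_le_contravar; lra. }
  assert (C2 : 1 / (y - 1) <= 1 / (INR n + 1)).
  { apply Rmult_le_compat_l; [lra|]. apply Rinv_le_contravar; lra. }
  unfold Hf.
  replace (LG (y + c) - LG y - c / 2 * (ln y + ln (y + c)) - / 2 * (ln y - ln (y + c)))
    with ((LG (y + c) - LG y - c * ln y) + (1 - c) / 2 * ln (1 + c / y)) by (rewrite E1; field).
  set (W := LG (y + c) - LG y - c * ln y).
  assert (HW1 : W <= c * ln (1 + c / y)) by (unfold W; rewrite E1 in Hw; lra).
  assert (HW2 : - (c * ln (1 + 1 / (y - 1))) <= W) by (unfold W; rewrite E2; lra).
  assert (D1 : c * ln (1 + c / y) <= c * (c / (INR n + 1))) by (apply Rmult_le_compat_l; lra).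
  assert (D2 : c * ln (1 + 1 / (y - 1)) <= c * (1 / (INR n + 1))) by (apply Rmult_le_compat_l; lra).
  assert (D3 : Rabs ((1 - c) / 2 * ln (1 + c / y)) <= Rabs (1 - c) / 2 * (c / (INR n + 1))).
  { rewrite Rabs_mult. unfold Rdiv at 1. rewrite Rabs_mult, (Rabs_right (/ 2)) by lra.
    rewrite (Rabs_right (ln (1 + c / y))) by lra.
    assert (0 <= Rabs (1 - c)) by apply Rabs_pos.
    replace (Rabs (1 - c) / 2 * (c / (INR n + 1))) with (Rabs (1 - c) * / 2 * (c / (INR n + 1))) by reflexivity.
    apply Rmult_le_compat_l. nra. lra. }
  assert (Hsum : (c + c * c + Rabs (1 - c) * c / 2) / (INR n + 1)
                 = c * (1 / (INR n + 1)) + c * (c / (INR n + 1)) + Rabs (1 - c) / 2 * (c / (INR n + 1)))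
    by (field; lra).
  rewrite Hsum.
  eapply Rle_trans. apply Rabs_triang.
  assert (Rabs W <= c * (1 / (INR n + 1)) + c * (c / (INR n + 1))).
  { apply Rabs_le. assert (0 <= c * (1 / (INR n + 1))) by (apply Rmult_le_pos; [lra|]; apply Rdiv_le_0_compat; lra).
    assert (0 <= c * (c / (INR n + 1))) by (apply Rmult_le_pos; [lra|]; apply Rdiv_le_0_compat; lra).
    lra. }
  lra.
Qed.

Lemma Hf_lim c a : 0 < a -> 0 < c -> is_lim_seq (fun n => sumn (fun j => phi c (a + INR j)) n) (Hf c a).
Proof.
  intros Ha Hc.
  apply is_lim_seq_ext with (fun n => Hf c a - Hf c (a + INR n)).
  { intros n; symmetry; apply Hf_tele; auto. }
  assert (H : is_lim_seq (fun n => Hf c a - Hf c (a + INR n)) (Hf c a - 0)).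
  { apply is_lim_seq_minus'. apply is_lim_seq_const. apply Hf_tail; auto. }
  rewrite Rminus_0_r in H. exact H.
Qed.

Lemma Hf_neg c a : 0 < a -> 0 < c < 1 -> Hf c a < 0.
Proof.
  intros Ha Hc.
  assert (Hp : forall x, 0 < x -> phi c x < 0).
  { intros x Hx. rewrite phi_E.
    assert (0 < Eexp nln c x) by (apply Epos with (f1 := nln1) (f2 := nln2); auto; [apply nln_d1|apply nln_d2|apply nln2_dec]).
    lra. }
  apply Rle_lt_trans with (phi c (a + INR 0)).
  - apply lim_neg_terms with (d := fun j => phi c (a + INR j)).
    intros j; apply Hp; generalize (pos_INR j); lra. apply Hf_lim; lra.
  - apply Hp. simpl; lra.
Qed.

Lemma Hf_pos c a : 0 < a -> 1 < c -> 0 < Hf c a.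
Proof.
  intros Ha Hc.
  assert (Hp : forall x, 0 < x -> 0 < phi c x).
  { intros x Hx. rewrite phi_E.
    assert (Eexp nln c x < 0) by (apply Eneg with (f1 := nln1) (f2 := nln2); auto; [apply nln_d1|apply nln_d2|apply nln2_dec]).
    lra. }
  apply Rlt_le_trans with (phi c (a + INR 0)).
  - apply Hp. simpl; lra.
  - apply lim_pos_terms with (d := fun j => phi c (a + INR j)).
    intros j; apply Hp; generalize (pos_INR j); lra. apply Hf_lim; lra.
Qed.

Definition eL a b := (LG b - LG a) / (b - a).
Definition eR a b := (ln a + ln b) / 2 + (ln a - ln b) / (2 * (b - a)).

Lemma eL_sym a b : a <> b -> eL a b = eL b a.
Proof. intros H. unfold eL. field. split; lra. Qed.
Lemma eR_sym a b : a <> b -> eR a b = eR b a.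
Proof. intros H. unfold eR. field. split; lra. Qed.

Lemma core_lt a c : 0 < a -> 0 < c < 1 -> eL a (a + c) < eR a (a + c).
Proof.
  intros Ha Hc. assert (H := Hf_neg c a Ha Hc).
  assert (E : eR a (a + c) - eL a (a + c) = - Hf c a / c).
  { unfold eR, eL, Hf. replace (a + c - a) with c by ring. field. lra. }
  assert (0 < - Hf c a / c) by (apply Rdiv_lt_0_compat; lra). lra.
Qed.

Lemma core_gt a c : 0 < a -> 1 < c -> eR a (a + c) < eL a (a + c).
Proof.
  intros Ha Hc. assert (H := Hf_pos c a Ha Hc).
  assert (E : eL a (a + c) - eR a (a + c) = Hf c a / c).
  { unfold eR, eL, Hf. replace (a + c - a) with c by ring. field. lra. }
  assert (0 < Hf c a / c) by (apply Rdiv_lt_0_compat; lra). lra.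
Qed.

Lemma LHS_eq a b : 0 < a -> 0 < b -> Rpower (Gamma b / Gamma a) (1 / (b - a)) = exp (eL a b).
Proof.
  intros Ha Hb. unfold Rpower, eL, LG. rewrite ln_div by (apply Gamma_pos; auto).
  f_equal. unfold Rdiv. ring.
Qed.

Lemma RHS_eq a b : 0 < a -> 0 < b ->
  sqrt (a * b) * Rpower (a / b) (1 / (2 * (b - a))) = exp (eR a b).
Proof.
  intros Ha Hb. rewrite <- Rpower_sqrt by (apply Rmult_lt_0_compat; auto).
  unfold Rpower. rewrite <- exp_plus. f_equal. unfold eR.
  rewrite ln_mult, ln_div by auto. unfold Rdiv. ring.
Qed.

Lemma part1 a b : 0 < a -> 0 < b -> a <> b ->
     (0 < Rabs (b - a) < 1 ->
        Rpower (Gamma b / Gamma a) (1 / (b - a))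
        < sqrt (a * b) * Rpower (a / b) (1 / (2 * (b - a)))) /\
     (Rabs (b - a) > 1 ->
        Rpower (Gamma b / Gamma a) (1 / (b - a))
        > sqrt (a * b) * Rpower (a / b) (1 / (2 * (b - a)))).
Proof.
  intros Ha Hb Hab. rewrite LHS_eq, RHS_eq by auto.
  destruct (Rlt_or_le a b) as [Hlt|Hle].
  - rewrite Rabs_right by lra.
    replace b with (a + (b - a)) by ring. replace (a + (b - a) - a) with (b - a) by ring.
    split; intros H.
    + apply exp_increasing. apply core_lt; lra.
    + apply exp_increasing. apply core_gt; lra.
  - assert (Hba : b < a) by lra.
    rewrite Rabs_left by lra. rewrite (eL_sym a b), (eR_sym a b) by auto.
    replace a with (b + (a - b)) by ring. replace (- (b - (b + (a - b)))) with (a - b) by ring.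
    split; intros H.
    + apply exp_increasing. apply core_lt; lra.
    + apply exp_increasing. apply core_gt; lra.
Qed.

Lemma dineq_sym k a b be ga : a <> b -> double_ineq k a b be ga -> double_ineq k b a be ga.
Proof.
  intros Hab. unfold double_ineq.
  set (F := INR (fact (k - 1))). set (s := (-1) ^ (k - 1)).
  set (Pa := polygamma (k - 1) a). set (Pb := polygamma (k - 1) b).
  set (X := / a ^ k). set (Y := / b ^ k).
  assert (E1 : forall t, F / 2 * ((1 / (b - a) + t) * X + (t - 1 / (b - a)) * Y)
                       = F / 2 * ((1 / (a - b) + t) * Y + (t - 1 / (a - b)) * X)).
  { intros t. field. split; lra. }
  assert (E2 : s * (Pb - Pa) / (b - a) = s * (Pa - Pb) / (a - b)) by (field; split; lra).
  rewrite !E1, E2. auto.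
Qed.

Lemma holds_neg c be ga : c <> 0 -> holds_all c be ga -> holds_all (- c) be ga.
Proof.
  intros Hc H0 k a b Hk Ha Hb Hba. apply dineq_sym. lra.
  apply H0; auto. lra.
Qed.

Lemma holds_abs c be ga : c <> 0 -> (holds_all c be ga <-> holds_all (Rabs c) be ga).
Proof.
  intros Hc. destruct (Rlt_or_le 0 c).
  - rewrite Rabs_right by lra. tauto.
  - rewrite Rabs_left by lra. split. apply holds_neg; auto.
    intros H1. replace c with (- - c) by ring. apply holds_neg; auto. lra.
Qed.

Lemma hold_small c be ga : 0 < c < 1 -> be <= 1 -> ga >= 1 / c -> holds_all c be ga.
Proof.
  intros Hc Hb Hg k a b Hk Ha Hb' Hba. destruct k as [|m]; [lia|].
  replace b with (a + c) by lra. apply if_small; auto.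
Qed.

Lemma hold_large c be ga : 1 < c -> be <= 1 / c -> ga >= 1 -> holds_all c be ga.
Proof.
  intros Hc Hb Hg k a b Hk Ha Hb' Hba. destruct k as [|m]; [lia|].
  replace b with (a + c) by lra. apply if_large; auto.
Qed.

Theorem theorem3 :
  (forall a b : R, 0 < a -> 0 < b -> a <> b ->
     (0 < Rabs (b - a) < 1 ->
        Rpower (Gamma b / Gamma a) (1 / (b - a))
        < sqrt (a * b) * Rpower (a / b) (1 / (2 * (b - a)))) /\
     (Rabs (b - a) > 1 ->
        Rpower (Gamma b / Gamma a) (1 / (b - a))
        > sqrt (a * b) * Rpower (a / b) (1 / (2 * (b - a)))))
  /\
  (forall c beta gam : R, c <> 0 ->
     (0 < Rabs c < 1 ->
        (holds_all c beta gam <-> beta <= 1 /\ gam >= 1 / Rabs c)) /\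
     (Rabs c > 1 ->
        (holds_all c beta gam <-> beta <= 1 / Rabs c /\ gam >= 1))).
Proof.
  split.
  - apply part1.
  - intros c be ga Hc. rewrite (holds_abs c be ga Hc). split; intros H; split.
    + apply onlyif_small; auto.
    + intros [H1 H2]. apply hold_small; auto.
    + apply onlyif_large; auto.
    + intros [H1 H2]. apply hold_large; auto.
Qed.
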